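(* Let $w$ be analytic on the open unit disk $D=\{|z|<1\}$ and suppose $w$ has a borderline hard singularity at a point $z_1$ with $|z_1|=1$. Then this singularity is integrable: the integral of $w$ along curves in $D$ reaching $z_1$ exists and is a finite complex number.
   Context: An inner analytic function is one analytic on the open unit disk centered at the origin. Its angular primitive is $w^{-1\cdot}(z)=-i\int_0^z\frac{w(z')-w(0)}{z'}dz'$ (integral along any curve in the disk, integrand extended at $0$ by $w'(0)$). A singular point of $w$ on the unit circle is a point where $w$ fails to be analytic; a singularity at $z_1$ is soft if $\lim_{z\to z_1}w(z)$ (from within the disk) exists and is finite, and hard otherwise. A hard singularity of $w$ at $z_1$ is borderline hard (degree of hardness zero) if a single angular integration produces a function $w^{-1\cdot}$ which has a soft singularity at $z_1$. *)

(* Defs.v *)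
From Stdlib Require Import Reals.
From Coquelicot Require Import Coquelicot.
Open Scope R_scope.

Definition Disk (z : C) : Prop := Cmod z < 1.

Definition analytic_on (U : C -> Prop) (f : C -> C) : Prop :=
  forall z, U z -> @ex_derive C_AbsRing C_NormedModule f z.

Definition CRInt (f : R -> C) (a b : R) : C :=
  @RInt C_R_CompleteNormedModule f a b.

Definition ang_integrand (w : C -> C) (z : C) : C :=
  if Ceq_dec z (RtoC 0) then
    @iota (CompleteNormedModule.CompleteSpace _ C_CompleteNormedModule)
      (fun l => @is_derive C_AbsRing C_NormedModule w (RtoC 0) l)
  else ((w z - w (RtoC 0)) / z)%C.

(* Angular primitive  w^{-1.}(z) = -i \int_0^z (w(z')-w(0))/z' dz',
   the integral taken along the segment t |-> t z, t in [0,1]. *)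
Definition ang_prim (w : C -> C) (z : C) : C :=
  (- Ci * CRInt (fun t : R => (ang_integrand w (RtoC t * z) * z)%C) 0 1)%C.

Definition singular_point (f : C -> C) (z1 : C) : Prop :=
  ~ exists (r : R) (g : C -> C),
      0 < r /\
      analytic_on (fun z => Cmod (z - z1) < r) g /\
      (forall z, Disk z -> Cmod (z - z1) < r -> g z = f z).

Definition has_finite_limit_in_disk (f : C -> C) (z1 : C) : Prop :=
  exists l : C, filterlim f (within Disk (locally z1)) (locally l).

Definition soft_singularity (f : C -> C) (z1 : C) : Prop :=
  singular_point f z1 /\ has_finite_limit_in_disk f z1.

Definition hard_singularity (f : C -> C) (z1 : C) : Prop :=
  singular_point f z1 /\ ~ has_finite_limit_in_disk f z1.

Definition borderline_hard (w : C -> C) (z1 : C) : Prop :=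
  hard_singularity w z1 /\ soft_singularity (ang_prim w) z1.

Definition curve_to (gamma dgamma : R -> C) (z1 : C) : Prop :=
  (forall t, 0 <= t < 1 -> Disk (gamma t)) /\
  (forall t, 0 <= t < 1 ->
      @is_derive R_AbsRing C_R_NormedModule gamma t (dgamma t)) /\
  (forall t, 0 <= t < 1 -> @continuous R_UniformSpace C_UniformSpace dgamma t) /\
  gamma 1 = z1 /\
  filterlim gamma (at_left 1) (locally z1).

Definition path_integral (w : C -> C) (gamma dgamma : R -> C) (s : R) : C :=
  CRInt (fun t => (w (gamma t) * dgamma t)%C) 0 s.

(* Main.v *)
Require Import Defs.
From Stdlib Require Import Reals Lra Lia.
From Coquelicot Require Import Coquelicot.
Open Scope R_scope.

Lemma deriv_eps {K : AbsRing} {V : NormedModule K} (f : K -> V) x l :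
  is_derive f x l <-> forall eps : posreal, exists delta : posreal, forall y,
    norm (minus y x) < delta ->
    norm (minus (minus (f y) (f x)) (scal (minus y x) l)) <= eps * norm (minus y x).
Proof.
  split.
  - intros [_ H] eps.
    specialize (H x (fun P HP => HP) eps).
    destruct (@locally_le_locally_norm K (AbsRing_NormedModule K) x _ H) as [d Hd].
    exists d. intros y Hy. apply Hd. exact Hy.
  - intros H. split; [apply is_linear_scal_l|].
    intros y Hy. apply (@is_filter_lim_locally_unique K (AbsRing_NormedModule K)) in Hy. subst y.
    intros eps. apply (@locally_norm_le_locally K (AbsRing_NormedModule K)).
    destruct (H eps) as [d Hd]. exists d. intros y Hy. apply Hd. exact Hy.
Qed.

Lemma Cderiv_eps (f : C -> C) z l :
  @is_derive C_AbsRing C_NormedModule f z l <->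
  forall eps, 0 < eps -> exists delta, 0 < delta /\ forall y,
    Cmod (y - z) < delta -> Cmod (f y - f z - (y - z) * l) <= eps * Cmod (y - z).
Proof.
  rewrite deriv_eps. split.
  - intros H eps Heps. destruct (H (mkposreal eps Heps)) as [d Hd].
    exists d. split; [apply cond_pos|]. intros y Hy. apply (Hd y Hy).
  - intros H eps. destruct (H eps (cond_pos eps)) as [d [Hd1 Hd2]].
    exists (mkposreal d Hd1). intros y Hy. apply (Hd2 y Hy).
Qed.

Lemma Rderiv_eps (g : R -> C) t d :
  @is_derive R_AbsRing C_R_NormedModule g t d <->
  forall eps, 0 < eps -> exists delta, 0 < delta /\ forall s,
    Rabs (s - t) < delta -> Cmod (g s - g t - RtoC (s - t) * d) <= eps * Rabs (s - t).
Proof.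
  rewrite deriv_eps. split.
  - intros H eps Heps. destruct (H (mkposreal eps Heps)) as [de Hd].
    exists de. split; [apply cond_pos|]. intros s Hs.
    specialize (Hd s Hs). rewrite <- Cmod_norm in Hd. rewrite scal_R_Cmult in Hd. exact Hd.
  - intros H eps. destruct (H eps (cond_pos eps)) as [de [Hd1 Hd2]].
    exists (mkposreal de Hd1). intros s Hs. rewrite scal_R_Cmult. rewrite <- Cmod_norm.
    apply (Hd2 s Hs).
Qed.

Lemma Ccont_eps (f : C -> C) z :
  @continuous C_UniformSpace C_UniformSpace f z <->
  forall eps, 0 < eps -> exists delta, 0 < delta /\ forall y,
    Cmod (y - z) < delta -> Cmod (f y - f z) < eps.
Proof.
  split.
  - intros H eps Heps.
    assert (Hl : @locally C_UniformSpace (f z) (fun u => Cmod (u - f z) < eps)).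
    { refine (@locally_le_locally_norm C_AbsRing C_NormedModule (f z) _ _).
      exists (mkposreal eps Heps). intros u Hu. exact Hu. }
    specialize (H _ Hl).
    destruct (@locally_norm_le_locally C_AbsRing C_NormedModule z _ H) as [d Hd]. exists d. split; [apply cond_pos|]. intros y Hy. apply (Hd y Hy).
  - intros H P HP.
    destruct (@locally_norm_le_locally C_AbsRing C_NormedModule (f z) _ HP) as [e He].
    refine (@locally_le_locally_norm C_AbsRing C_NormedModule z _ _).
    destruct (H e (cond_pos e)) as [d [Hd1 Hd2]].
    exists (mkposreal d Hd1). intros y Hy. apply He. apply (Hd2 y Hy).
Qed.

Lemma Rcont_eps (f : R -> C) t :
  @continuous R_UniformSpace C_UniformSpace f t <->
  forall eps, 0 < eps -> exists delta, 0 < delta /\ forall s,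
    Rabs (s - t) < delta -> Cmod (f s - f t) < eps.
Proof.
  split.
  - intros H eps Heps.
    assert (Hl : @locally C_UniformSpace (f t) (fun u => Cmod (u - f t) < eps)).
    { refine (@locally_le_locally_norm C_AbsRing C_NormedModule (f t) _ _).
      exists (mkposreal eps Heps). intros u Hu. exact Hu. }
    specialize (H _ Hl).
    destruct (@locally_norm_le_locally R_AbsRing R_NormedModule t _ H) as [d Hd]. exists d. split; [apply cond_pos|]. intros y Hy. apply (Hd y Hy).
  - intros H P HP.
    destruct (@locally_norm_le_locally C_AbsRing C_NormedModule (f t) _ HP) as [e He].
    refine (@locally_le_locally_norm R_AbsRing R_NormedModule t _ _).
    destruct (H e (cond_pos e)) as [d [Hd1 Hd2]].
    exists (mkposreal d Hd1). intros y Hy. apply He. apply (Hd2 y Hy).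
Qed.

Definition contC (f : C -> C) (z : C) : Prop :=
  forall eps, 0 < eps -> exists delta, 0 < delta /\ forall y,
    Cmod (y - z) < delta -> Cmod (f y - f z) < eps.

Definition segI (f : C -> C) (a b : C) : R -> C :=
  fun t => (f (a + RtoC t * (b - a)) * (b - a))%C.

Definition seg (f : C -> C) (a b : C) : C := CRInt (segI f a b) 0 1.

Lemma Cmod_scal (t : R) (z : C) : Cmod (RtoC t * z) = Rabs t * Cmod z.
Proof. rewrite Cmod_mult, Cmod_R. reflexivity. Qed.

Lemma segI_cont f a b t : contC f (a + RtoC t * (b - a)) ->
  @continuous R_UniformSpace C_UniformSpace (segI f a b) t.
Proof.
  intros Hc. apply Rcont_eps. intros eps Heps.
  assert (Hb : 0 < Cmod (b - a) + 1) by (pose proof (Cmod_ge_0 (b - a)); lra).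
  destruct (Hc (eps / (Cmod (b - a) + 1))) as [d [Hd1 Hd2]].
  { apply Rdiv_lt_0_compat; lra. }
  exists (d / (Cmod (b - a) + 1)). split. { apply Rdiv_lt_0_compat; lra. }
  intros s Hs. unfold segI.
  replace (f (a + RtoC s * (b - a)) * (b - a) - f (a + RtoC t * (b - a)) * (b - a))%C
    with ((f (a + RtoC s * (b - a)) - f (a + RtoC t * (b - a))) * (b - a))%C by ring.
  rewrite Cmod_mult.
  assert (H1 : Cmod (a + RtoC s * (b - a) - (a + RtoC t * (b - a))) < d).
  { replace (a + RtoC s * (b - a) - (a + RtoC t * (b - a)))%C with (RtoC (s - t) * (b - a))%C
      by (rewrite RtoC_minus; ring).
    rewrite Cmod_scal.
    apply Rle_lt_trans with (Rabs (s - t) * (Cmod (b - a) + 1)).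
    - apply Rmult_le_compat_l; [apply Rabs_pos|lra].
    - apply Rlt_div_r in Hs; [|lra]. lra. }
  specialize (Hd2 _ H1).
  pose proof (Cmod_ge_0 ((f (a + RtoC s * (b - a)) - f (a + RtoC t * (b - a)))%C)).
  pose proof (Cmod_ge_0 (b - a)%C).
  apply Rle_lt_trans with ((eps / (Cmod (b - a) + 1)) * Cmod (b - a)).
  - apply Rmult_le_compat_r; lra.
  - apply Rlt_le_trans with ((eps / (Cmod (b - a) + 1)) * (Cmod (b - a) + 1)).
    + apply Rmult_lt_compat_l; [apply Rdiv_lt_0_compat|]; lra.
    + right. field. lra.
Qed.

Definition segcont (f : C -> C) (a b : C) : Prop :=
  forall t, 0 <= t <= 1 -> contC f (a + RtoC t * (b - a)).

Lemma scalRC (s : R) (y : C_R_NormedModule) : scal s y = (RtoC s * y)%C.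
Proof. exact (scal_R_Cmult s y). Qed.

Ltac Csimpl := rewrite ?RtoC_plus, ?RtoC_mult, ?RtoC_minus, ?RtoC_opp.
Ltac Cring := match goal with |- ?x = ?y => change (@eq C x y); ring end.

Lemma seg_ex_sub f a b u v : segcont f a b -> 0 <= u -> u <= v -> v <= 1 ->
  @ex_RInt C_R_CompleteNormedModule (segI f a b) u v.
Proof.
  intros Hc Hu Huv Hv. apply ex_RInt_continuous. intros z Hz.
  rewrite Rmin_left in Hz by lra. rewrite Rmax_right in Hz by lra.
  apply segI_cont. apply Hc. lra.
Qed.

Lemma seg_correct f a b : segcont f a b ->
  @is_RInt C_R_NormedModule (segI f a b) 0 1 (seg f a b).
Proof.
  intros Hc. unfold seg, CRInt. apply (@RInt_correct C_R_CompleteNormedModule).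
  apply seg_ex_sub; auto; lra.
Qed.

Lemma seg_split f a b s m : segcont f a b -> 0 <= s <= 1 -> m = (a + RtoC s * (b - a))%C ->
  seg f a b = (seg f a m + seg f m b)%C.
Proof.
  intros Hc Hs Hm.
  assert (E1 : @ex_RInt C_R_CompleteNormedModule (segI f a b) 0 s) by (apply seg_ex_sub; auto; lra).
  assert (E2 : @ex_RInt C_R_CompleteNormedModule (segI f a b) s 1) by (apply seg_ex_sub; auto; lra).
  unfold seg at 1, CRInt. rewrite <- (@RInt_Chasles C_R_CompleteNormedModule _ 0 s 1 E1 E2).
  assert (I1 : @is_RInt C_R_NormedModule (segI f a m) 0 1 (CRInt (segI f a b) 0 s)).
  { pose proof (@RInt_correct C_R_CompleteNormedModule _ _ _ E1) as H.
    assert (H' : @is_RInt C_R_NormedModule (segI f a b) (s * 0 + 0) (s * 1 + 0) (CRInt (segI f a b) 0 s)).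
    { replace (s * 0 + 0) with 0 by ring. replace (s * 1 + 0) with s by ring. exact H. }
    apply is_RInt_comp_lin in H'.
    eapply is_RInt_ext; [|exact H'].
    intros y _. cbv beta. rewrite scalRC. unfold segI. subst m.
    replace (a + RtoC (s * y + 0) * (b - a))%C with (a + RtoC y * (a + RtoC s * (b - a) - a))%C
      by (Csimpl; ring).
    Csimpl. Cring. }
  assert (I2 : @is_RInt C_R_NormedModule (segI f m b) 0 1 (CRInt (segI f a b) s 1)).
  { pose proof (@RInt_correct C_R_CompleteNormedModule _ _ _ E2) as H.
    assert (H' : @is_RInt C_R_NormedModule (segI f a b) ((1 - s) * 0 + s) ((1 - s) * 1 + s) (CRInt (segI f a b) s 1)).
    { replace ((1 - s) * 0 + s) with s by ring. replace ((1 - s) * 1 + s) with 1 by ring. exact H. }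
    apply is_RInt_comp_lin in H'.
    eapply is_RInt_ext; [|exact H'].
    intros y _. cbv beta. rewrite scalRC. unfold segI. subst m.
    replace (a + RtoC ((1 - s) * y + s) * (b - a))%C
      with (a + RtoC s * (b - a) + RtoC y * (b - (a + RtoC s * (b - a))))%C
      by (Csimpl; ring).
    Csimpl. Cring. }
  unfold seg, CRInt.
  rewrite (@is_RInt_unique C_R_CompleteNormedModule _ _ _ _ I1). rewrite (@is_RInt_unique C_R_CompleteNormedModule _ _ _ _ I2). reflexivity.
Qed.

Lemma seg_rev f a b : segcont f a b -> seg f b a = (- seg f a b)%C.
Proof.
  intros Hc. pose proof (seg_correct f a b Hc) as H.
  apply (@is_RInt_swap C_R_NormedModule) in H.
  assert (H' : @is_RInt C_R_NormedModule (segI f a b) ((-1) * 0 + 1) ((-1) * 1 + 1) (opp (seg f a b))).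
  { replace ((-1) * 0 + 1) with 1 by ring. replace ((-1) * 1 + 1) with 0 by ring. exact H. }
  apply is_RInt_comp_lin in H'.
  assert (H2 : @is_RInt C_R_NormedModule (segI f b a) 0 1 (opp (seg f a b))).
  { eapply is_RInt_ext; [|exact H'].
    intros y _. cbv beta. rewrite scalRC. unfold segI.
    replace (a + RtoC ((-1) * y + 1) * (b - a))%C with (b + RtoC y * (a - b))%C
      by (Csimpl; ring).
    Csimpl. Cring. }
  unfold seg at 1, CRInt. rewrite (@is_RInt_unique C_R_CompleteNormedModule _ _ _ _ H2). reflexivity.
Qed.

Lemma seg_minus f g a b : segcont f a b -> segcont g a b ->
  seg (fun z => f z - g z)%C a b = (seg f a b - seg g a b)%C.
Proof.
  intros Hf Hg. pose proof (is_RInt_minus _ _ _ _ _ _ (seg_correct f a b Hf) (seg_correct g a b Hg)) as H.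
  transitivity (CRInt (fun y => minus (segI f a b y) (segI g a b y)) 0 1).
  - unfold seg, CRInt. apply (@RInt_ext C_R_CompleteNormedModule). intros x _. unfold segI. change (minus ?x ?y) with (x - y)%C. Cring.
  - unfold CRInt. apply (@is_RInt_unique C_R_CompleteNormedModule). exact H.
Qed.

Lemma seg_const k a b : seg (fun _ => k) a b = (k * (b - a))%C.
Proof.
  unfold seg, CRInt, segI. rewrite RInt_const. rewrite scal_R_Cmult. Csimpl. ring.
Qed.

Lemma seg_bound f a b M : segcont f a b ->
  (forall t, 0 <= t <= 1 -> Cmod (f (a + RtoC t * (b - a))%C) <= M) ->
  Cmod (seg f a b) <= Cmod (b - a) * M.
Proof.
  intros Hc HM. pose proof (seg_correct f a b Hc) as H.
  rewrite Cmod_norm.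
  eapply Rle_trans.
  - apply (@norm_RInt_le_const C_R_NormedModule (segI f a b) 0 1 (seg f a b) (M * Cmod (b - a))); [lra| |exact H].
    intros x Hx. rewrite <- Cmod_norm. unfold segI. rewrite Cmod_mult.
    apply Rmult_le_compat_r; [apply Cmod_ge_0|]. apply HM; exact Hx.
  - right. ring.
Qed.

Lemma seg_ext f g a b : (forall t, 0 <= t <= 1 -> f (a + RtoC t * (b - a))%C = g (a + RtoC t * (b - a))%C) ->
  seg f a b = seg g a b.
Proof.
  intros H. unfold seg, CRInt. apply (@RInt_ext C_R_CompleteNormedModule). intros x Hx.
  rewrite Rmin_left in Hx by lra. rewrite Rmax_right in Hx by lra.
  unfold segI. rewrite H by lra. reflexivity.
Qed.

Notation Cder := (@is_derive C_AbsRing C_NormedModule).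
Notation Rder := (@is_derive R_AbsRing C_R_NormedModule).

Lemma deriv_contC f z l : Cder f z l -> contC f z.
Proof.
  intros H. rewrite Cderiv_eps in H. intros e He.
  destruct (H 1 Rlt_0_1) as [d1 [Hd1 H1]].
  pose proof (Cmod_ge_0 l) as Hl.
  exists (Rmin d1 (e / (Cmod l + 1))). split.
  { apply Rmin_pos; [lra|apply Rdiv_lt_0_compat; lra]. }
  intros y Hy.
  assert (Hy1 : Cmod (y - z) < d1) by (eapply Rlt_le_trans; [exact Hy|apply Rmin_l]).
  assert (Hy2 : Cmod (y - z) < e / (Cmod l + 1)) by (eapply Rlt_le_trans; [exact Hy|apply Rmin_r]).
  specialize (H1 y Hy1).
  replace (f y - f z)%C with ((f y - f z - (y - z) * l) + (y - z) * l)%C by ring.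
  eapply Rle_lt_trans; [apply Cmod_triangle|]. rewrite Cmod_mult.
  apply Rlt_div_r in Hy2; [|lra].
  pose proof (Cmod_ge_0 (y - z)%C). nra.
Qed.

Lemma chain_CR (f : C -> C) (g : R -> C) t L d :
  Cder f (g t) L -> Rder g t d -> Rder (fun s => f (g s)) t (L * d)%C.
Proof.
  intros Hf Hg. rewrite Cderiv_eps in Hf. rewrite Rderiv_eps in Hg |- *.
  intros e He.
  pose proof (Cmod_ge_0 L) as HL. pose proof (Cmod_ge_0 d) as Hd.
  destruct (Hg 1 Rlt_0_1) as [d2 [Hd2 H2]].
  destruct (Hg (e / (2 * (Cmod L + 1)))) as [d3 [Hd3 H3]].
  { apply Rdiv_lt_0_compat; lra. }
  destruct (Hf (e / (2 * (Cmod d + 1)))) as [d1 [Hd1 H1]].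
  { apply Rdiv_lt_0_compat; lra. }
  exists (Rmin d2 (Rmin d3 (d1 / (Cmod d + 1)))). split.
  { repeat apply Rmin_pos; try lra. apply Rdiv_lt_0_compat; lra. }
  intros s Hs.
  assert (Hs2 : Rabs (s - t) < d2) by (eapply Rlt_le_trans; [exact Hs|apply Rmin_l]).
  assert (Hs3 : Rabs (s - t) < d3).
  { eapply Rlt_le_trans; [exact Hs|]. eapply Rle_trans; [apply Rmin_r|apply Rmin_l]. }
  assert (Hs1 : Rabs (s - t) < d1 / (Cmod d + 1)).
  { eapply Rlt_le_trans; [exact Hs|]. eapply Rle_trans; [apply Rmin_r|apply Rmin_r]. }
  specialize (H2 s Hs2). specialize (H3 s Hs3).
  pose proof (Rabs_pos (s - t)) as Ha.
  assert (Hgb : Cmod (g s - g t) <= Rabs (s - t) * (Cmod d + 1)).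
  { replace (g s - g t)%C with ((g s - g t - RtoC (s - t) * d) + RtoC (s - t) * d)%C by ring.
    eapply Rle_trans; [apply Cmod_triangle|]. rewrite Cmod_scal. lra. }
  assert (Hgl : Cmod (g s - g t) < d1).
  { apply Rlt_div_r in Hs1; [|lra]. lra. }
  specialize (H1 (g s) Hgl).
  replace (f (g s) - f (g t) - RtoC (s - t) * (L * d))%C
    with ((f (g s) - f (g t) - (g s - g t) * L) + L * (g s - g t - RtoC (s - t) * d))%C by ring.
  eapply Rle_trans; [apply Cmod_triangle|]. rewrite Cmod_mult.
  assert (A1 : e / (2 * (Cmod d + 1)) * Cmod (g s - g t) <= e / 2 * Rabs (s - t)).
  { apply Rle_trans with (e / (2 * (Cmod d + 1)) * (Rabs (s - t) * (Cmod d + 1))).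
    - apply Rmult_le_compat_l; [|exact Hgb]. apply Rlt_le, Rdiv_lt_0_compat; lra.
    - right. field. lra. }
  assert (A2 : Cmod L * Cmod (g s - g t - RtoC (s - t) * d) <= e / 2 * Rabs (s - t)).
  { apply Rle_trans with (Cmod L * (e / (2 * (Cmod L + 1)) * Rabs (s - t))).
    - apply Rmult_le_compat_l; [exact HL|exact H3].
    - apply Rle_trans with ((Cmod L + 1) * (e / (2 * (Cmod L + 1)) * Rabs (s - t))).
      + apply Rmult_le_compat_r; [|lra].
        apply Rmult_le_pos; [apply Rlt_le, Rdiv_lt_0_compat; lra|exact Ha].
      + right. field. lra. }
  lra.
Qed.

Lemma curve_FTC (H h : C -> C) (g dg : R -> C) s : 0 <= s ->
  (forall t, 0 <= t <= s -> Rder g t (dg t)) ->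
  (forall t, 0 <= t <= s -> Cder H (g t) (h (g t))) ->
  (forall t, 0 <= t <= s -> @continuous R_UniformSpace C_UniformSpace (fun t => (h (g t) * dg t)%C) t) ->
  CRInt (fun t => (h (g t) * dg t)%C) 0 s = (H (g s) - H (g 0))%C.
Proof.
  intros Hs Hg HH Hc.
  assert (I : @is_RInt C_R_NormedModule (fun t => (h (g t) * dg t)%C) 0 s (minus (H (g s)) (H (g 0)))).
  { apply (@is_RInt_derive C_R_CompleteNormedModule (fun t => H (g t))).
    - intros x Hx. rewrite Rmin_left in Hx by lra. rewrite Rmax_right in Hx by lra.
      apply chain_CR; auto.
    - intros x Hx. rewrite Rmin_left in Hx by lra. rewrite Rmax_right in Hx by lra.
      apply Hc; auto. }
  unfold CRInt. rewrite (@is_RInt_unique C_R_CompleteNormedModule _ _ _ _ I). reflexivity.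
Qed.

Lemma seg_FTC (H h : C -> C) a b :
  (forall t, 0 <= t <= 1 -> Cder H (a + RtoC t * (b - a))%C (h (a + RtoC t * (b - a))%C)) ->
  segcont h a b -> seg h a b = (H b - H a)%C.
Proof.
  intros HH Hc. unfold seg, segI.
  rewrite (curve_FTC H h (fun t => a + RtoC t * (b - a))%C (fun _ => (b - a)%C) 1); [| lra | | exact HH | ].
  - f_equal; f_equal; ring.
  - intros t _. apply Rderiv_eps. intros e He. exists 1. split; [lra|]. intros s _.
    replace (a + RtoC s * (b - a) - (a + RtoC t * (b - a)) - RtoC (s - t) * (b - a))%C with (RtoC 0)
      by (Csimpl; ring).
    rewrite Cmod_0. pose proof (Rabs_pos (s - t)). nra.
  - intros t Ht. apply segI_cont. apply Hc. exact Ht.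
Qed.

Ltac Cfield := apply injective_projections; unfold Cminus, Cplus, Cmult, Copp, RtoC; simpl; field.

Lemma Cmod_sym (x y : C) : Cmod (x - y) = Cmod (y - x).
Proof. replace (x - y)%C with (- (y - x))%C by ring. apply Cmod_opp. Qed.

Definition convexK (K : C -> Prop) : Prop :=
  forall x y t, K x -> K y -> 0 <= t <= 1 -> K (x + RtoC t * (y - x))%C.
Definition closedK (K : C -> Prop) : Prop :=
  forall z, (forall eps, 0 < eps -> exists y, K y /\ Cmod (y - z) < eps) -> K z.

Definition E (f : C -> C) (a b c : C) : C := (seg f a b + seg f b c + seg f c a)%C.
Definition mid (x y : C) : C := (x + RtoC (1/2) * (y - x))%C.
Definition tri := (C * C * C)%type.
Definition per (T : tri) : R := let '(a, b, c) := T in Cmod (a - b) + Cmod (b - c) + Cmod (c - a).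
Definition ET (f : C -> C) (T : tri) : C := let '(a, b, c) := T in E f a b c.
Definition KT (K : C -> Prop) (T : tri) : Prop := let '(a, b, c) := T in K a /\ K b /\ K c.
Definition sub1 (T : tri) : tri := let '(a, b, c) := T in (a, mid a b, mid c a).
Definition sub2 (T : tri) : tri := let '(a, b, c) := T in (mid a b, b, mid b c).
Definition sub3 (T : tri) : tri := let '(a, b, c) := T in (mid c a, mid b c, c).
Definition sub4 (T : tri) : tri := let '(a, b, c) := T in (mid a b, mid b c, mid c a).
Definition pick (f : C -> C) (T : tri) : tri :=
  if Rle_dec (Cmod (ET f T)) (4 * Cmod (ET f (sub1 T))) then sub1 T else
  if Rle_dec (Cmod (ET f T)) (4 * Cmod (ET f (sub2 T))) then sub2 T else
  if Rle_dec (Cmod (ET f T)) (4 * Cmod (ET f (sub3 T))) then sub3 T else sub4 T.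

Lemma Kseg (K : C -> Prop) f x y : convexK K -> (forall z, K z -> contC f z) -> K x -> K y -> segcont f x y.
Proof. intros Hc Hf Hx Hy t Ht. apply Hf. apply Hc; auto. Qed.

Lemma K_mid K x y : convexK K -> K x -> K y -> K (mid x y).
Proof. intros Hc Hx Hy. apply Hc; auto; lra. Qed.

Lemma decomp K f a b c : convexK K -> (forall z, K z -> contC f z) -> K a -> K b -> K c ->
  E f a b c = (ET f (sub1 (a, b, c)) + ET f (sub2 (a, b, c)) + ET f (sub3 (a, b, c)) + ET f (sub4 (a, b, c)))%C.
Proof.
  intros Hc Hf Ha Hb Hcc. simpl. unfold E.
  assert (M1 := K_mid K a b Hc Ha Hb). assert (M2 := K_mid K b c Hc Hb Hcc).
  assert (M3 := K_mid K c a Hc Hcc Ha).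
  rewrite (seg_split f a b (1/2) (mid a b)) by (auto; try apply (Kseg K); auto; lra).
  rewrite (seg_split f b c (1/2) (mid b c)) by (auto; try apply (Kseg K); auto; lra).
  rewrite (seg_split f c a (1/2) (mid c a)) by (auto; try apply (Kseg K); auto; lra).
  rewrite (seg_rev f (mid a b) (mid c a)) by (apply (Kseg K); auto).
  rewrite (seg_rev f (mid b c) (mid a b)) by (apply (Kseg K); auto).
  rewrite (seg_rev f (mid c a) (mid b c)) by (apply (Kseg K); auto).
  ring.
Qed.

Lemma pick_E K f T : convexK K -> (forall z, K z -> contC f z) -> KT K T ->
  Cmod (ET f T) <= 4 * Cmod (ET f (pick f T)).
Proof.
  intros Hc Hf HT. unfold pick.
  destruct (Rle_dec _ _) as [h1|h1]; [exact h1|].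
  destruct (Rle_dec _ _) as [h2|h2]; [exact h2|].
  destruct (Rle_dec _ _) as [h3|h3]; [exact h3|].
  destruct T as [[a b] c]. destruct HT as [Ha [Hb Hcc]].
  assert (D := decomp K f a b c Hc Hf Ha Hb Hcc).
  change (ET f (a, b, c)) with (E f a b c) in *. rewrite D in h1, h2, h3 |- *.
  set (e1 := ET f (sub1 (a, b, c))) in *. set (e2 := ET f (sub2 (a, b, c))) in *.
  set (e3 := ET f (sub3 (a, b, c))) in *. set (e4 := ET f (sub4 (a, b, c))) in *.
  assert (Tr : Cmod (e1 + e2 + e3 + e4) <= Cmod e1 + Cmod e2 + Cmod e3 + Cmod e4).
  { eapply Rle_trans; [apply Cmod_triangle|].
    eapply Rle_trans; [apply Rplus_le_compat_r, Cmod_triangle|].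
    pose proof (Cmod_triangle e1 e2). lra. }
  lra.
Qed.

Lemma pick_K K f T : convexK K -> KT K T -> KT K (pick f T).
Proof.
  intros Hc HT. destruct T as [[a b] c]. destruct HT as [Ha [Hb Hcc]].
  assert (M1 := K_mid K a b Hc Ha Hb). assert (M2 := K_mid K b c Hc Hb Hcc).
  assert (M3 := K_mid K c a Hc Hcc Ha).
  unfold pick. repeat destruct (Rle_dec _ _); simpl; auto.
Qed.

Lemma Cmod_half (r : R) (z : C) : Rabs r = 1/2 -> Cmod (RtoC r * z) = Cmod z / 2.
Proof. intros H. rewrite Cmod_scal, H. field. Qed.

Lemma pick_per f T : per (pick f T) = per T / 2.
Proof.
  destruct T as [[a b] c]. unfold pick.
  assert (P : Rabs (1/2) = 1/2) by (rewrite Rabs_pos_eq; lra).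
  assert (N : Rabs (-1/2) = 1/2) by (rewrite Rabs_left; lra).
  repeat destruct (Rle_dec _ _); simpl; unfold mid.
  - replace (a - (a + RtoC (1/2) * (b - a)))%C with (RtoC (-1/2) * (b - a))%C by Cfield.
    replace (a + RtoC (1/2) * (b - a) - (c + RtoC (1/2) * (a - c)))%C with (RtoC (1/2) * (b - c))%C by Cfield.
    replace (c + RtoC (1/2) * (a - c) - a)%C with (RtoC (1/2) * (c - a))%C by Cfield.
    rewrite !Cmod_half by auto. rewrite (Cmod_sym b a). field.
  - replace (a + RtoC (1/2) * (b - a) - b)%C with (RtoC (1/2) * (a - b))%C by Cfield.
    replace (b - (b + RtoC (1/2) * (c - b)))%C with (RtoC (1/2) * (b - c))%C by Cfield.
    replace (b + RtoC (1/2) * (c - b) - (a + RtoC (1/2) * (b - a)))%C with (RtoC (1/2) * (c - a))%C by Cfield.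
    rewrite !Cmod_half by auto. field.
  - replace (c + RtoC (1/2) * (a - c) - (b + RtoC (1/2) * (c - b)))%C with (RtoC (1/2) * (a - b))%C by Cfield.
    replace (b + RtoC (1/2) * (c - b) - c)%C with (RtoC (-1/2) * (c - b))%C by Cfield.
    replace (c - (c + RtoC (1/2) * (a - c)))%C with (RtoC (1/2) * (c - a))%C by Cfield.
    rewrite !Cmod_half by auto. rewrite (Cmod_sym c b). field.
  - replace (a + RtoC (1/2) * (b - a) - (b + RtoC (1/2) * (c - b)))%C with (RtoC (-1/2) * (c - a))%C by Cfield.
    replace (b + RtoC (1/2) * (c - b) - (c + RtoC (1/2) * (a - c)))%C with (RtoC (-1/2) * (a - b))%C by Cfield.
    replace (c + RtoC (1/2) * (a - c) - (a + RtoC (1/2) * (b - a)))%C with (RtoC (-1/2) * (b - c))%C by Cfield.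
    rewrite !Cmod_half by auto. field.
Qed.

Definition v1 (T : tri) : C := let '(a, b, c) := T in a.

Lemma per_ge0 T : 0 <= per T.
Proof. destruct T as [[a b] c]. simpl. pose proof (Cmod_ge_0 (a - b)%C).
  pose proof (Cmod_ge_0 (b - c)%C). pose proof (Cmod_ge_0 (c - a)%C). lra. Qed.

Lemma pick_v1 f T : Cmod (v1 (pick f T) - v1 T) <= per T.
Proof.
  pose proof (per_ge0 T) as Hp.
  destruct T as [[a b] c]. unfold pick.
  assert (P : Rabs (1/2) = 1/2) by (rewrite Rabs_pos_eq; lra).
  assert (N : Rabs (-1/2) = 1/2) by (rewrite Rabs_left; lra).
  simpl in Hp |- *.
  pose proof (Cmod_ge_0 (a - b)%C). pose proof (Cmod_ge_0 (b - c)%C). pose proof (Cmod_ge_0 (c - a)%C).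
  repeat destruct (Rle_dec _ _); simpl; unfold mid.
  - replace (a - a)%C with (RtoC 0) by ring. rewrite Cmod_0. lra.
  - replace (a + RtoC (1/2) * (b - a) - a)%C with (RtoC (-1/2) * (a - b))%C by Cfield.
    rewrite Cmod_half by auto. lra.
  - replace (c + RtoC (1/2) * (a - c) - a)%C with (RtoC (1/2) * (c - a))%C by Cfield.
    rewrite Cmod_half by auto. lra.
  - replace (a + RtoC (1/2) * (b - a) - a)%C with (RtoC (-1/2) * (a - b))%C by Cfield.
    rewrite Cmod_half by auto. lra.
Qed.

Lemma edge_near T x y t : 0 <= t <= 1 ->
  (let '(a, b, c) := T in (x = a /\ y = b) \/ (x = b /\ y = c) \/ (x = c /\ y = a)) ->
  Cmod (x + RtoC t * (y - x) - v1 T) <= per T.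
Proof.
  intros Ht H. destruct T as [[a b] c]. simpl.
  pose proof (Cmod_ge_0 (a - b)%C). pose proof (Cmod_ge_0 (b - c)%C). pose proof (Cmod_ge_0 (c - a)%C).
  assert (Rt : Rabs t <= 1) by (rewrite Rabs_pos_eq; lra).
  destruct H as [[-> ->]|[[-> ->]|[-> ->]]].
  - replace (a + RtoC t * (b - a) - a)%C with (RtoC t * (b - a))%C by ring.
    rewrite Cmod_scal, (Cmod_sym b a). pose proof (Rabs_pos t). nra.
  - replace (b + RtoC t * (c - b) - a)%C with ((b - a) + RtoC t * (c - b))%C by ring.
    eapply Rle_trans; [apply Cmod_triangle|]. rewrite Cmod_scal, (Cmod_sym b a), (Cmod_sym c b).
    pose proof (Rabs_pos t). nra.
  - replace (c + RtoC t * (a - c) - a)%C with (RtoC (1 - t) * (c - a))%C by (Csimpl; ring).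
    rewrite Cmod_scal. rewrite Rabs_pos_eq by lra. nra.
Qed.

Lemma contC_minus f g z : contC f z -> contC g z -> contC (fun u => f u - g u)%C z.
Proof.
  intros Hf Hg e He.
  destruct (Hf (e/2)) as [d1 [Hd1 H1]]; [lra|].
  destruct (Hg (e/2)) as [d2 [Hd2 H2]]; [lra|].
  exists (Rmin d1 d2). split; [apply Rmin_pos; lra|]. intros y Hy.
  assert (Hy1 : Cmod (y - z) < d1) by (eapply Rlt_le_trans; [exact Hy|apply Rmin_l]).
  assert (Hy2 : Cmod (y - z) < d2) by (eapply Rlt_le_trans; [exact Hy|apply Rmin_r]).
  specialize (H1 y Hy1). specialize (H2 y Hy2).
  replace (f y - g y - (f z - g z))%C with ((f y - f z) + - (g y - g z))%C by ring.
  eapply Rle_lt_trans; [apply Cmod_triangle|]. rewrite Cmod_opp. lra.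
Qed.

Lemma affine_der (al be z : C) :
  Cder (fun u => al * u + be * (RtoC (1/2) * u * u))%C z (al + be * z)%C.
Proof.
  apply Cderiv_eps. intros e He.
  pose proof (Cmod_ge_0 be) as Hb.
  exists (e / (Cmod be + 1)). split; [apply Rdiv_lt_0_compat; lra|].
  intros y Hy.
  replace (al * y + be * (RtoC (1/2) * y * y) - (al * z + be * (RtoC (1/2) * z * z)) - (y - z) * (al + be * z))%C
    with (be * (RtoC (1/2) * (y - z)) * (y - z))%C by Cfield.
  rewrite !Cmod_mult. rewrite Cmod_R. rewrite Rabs_pos_eq by lra.
  pose proof (Cmod_ge_0 (y - z)%C) as Hyz.
  apply Rlt_div_r in Hy; [|lra].
  assert (Cmod be * (1/2 * Cmod (y - z)) <= e) by nra.
  nra.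
Qed.

Lemma lin_der (al be z : C) : Cder (fun u => al + be * u)%C z be.
Proof.
  apply Cderiv_eps. intros e He. exists 1. split; [lra|]. intros y _.
  replace (al + be * y - (al + be * z) - (y - z) * be)%C with (RtoC 0) by ring.
  rewrite Cmod_0. pose proof (Cmod_ge_0 (y - z)%C). nra.
Qed.

Lemma E_affine al be a b c : E (fun z => al + be * z)%C a b c = 0%C.
Proof.
  set (H := fun u => (al * u + be * (RtoC (1/2) * u * u))%C).
  assert (HS : forall x w, seg (fun z => al + be * z)%C x w = (H w - H x)%C).
  { intros x w. apply seg_FTC. - intros t _. apply affine_der.
    - intros t _. eapply deriv_contC. apply lin_der. }
  unfold E. rewrite !HS. ring.
Qed.

Lemma tri_bound K f T y l e d : convexK K -> (forall z, K z -> contC f z) -> KT K T ->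
  (forall u, Cmod (u - y) < d -> Cmod (f u - f y - (u - y) * l) <= e * Cmod (u - y)) ->
  Cmod (y - v1 T) <= 2 * per T -> 3 * per T < d -> 0 < e ->
  Cmod (ET f T) <= e * (3 * per T ^ 2).
Proof.
  intros Hc Hf HT Hd Hy Hp He.
  set (aff := fun u => (f y - l * y + l * u)%C).
  set (r := fun u => (f u - aff u)%C).
  assert (Caff : forall z, contC aff z).
  { intros z. unfold aff. eapply deriv_contC.
    apply (lin_der (f y - l * y) l z). }
  destruct T as [[a b] c]. destruct HT as [Ha [Hb Hcc]].
  assert (Cr : forall z, K z -> contC r z) by (intros; apply contC_minus; auto).
  assert (Sr : forall x w, K x -> K w -> seg r x w = (seg f x w - seg aff x w)%C).
  { intros x w Hx Hw. apply seg_minus; [apply (Kseg K); auto|]. intros t _. apply Caff. }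
  assert (EE : ET f (a, b, c) = E r a b c).
  { change (ET f (a, b, c)) with (E f a b c). unfold E. rewrite !Sr by auto.
    pose proof (E_affine (f y - l * y)%C l a b c) as EA. unfold E in EA.
    fold aff in EA.
    replace (seg (fun z => f y - l * y + l * z)%C a b) with (seg aff a b) in EA by reflexivity.
    transitivity (seg f a b + seg f b c + seg f c a - (seg aff a b + seg aff b c + seg aff c a))%C.
    - rewrite EA. ring.
    - ring. }
  rewrite EE.
  assert (Bd : forall x w, K x -> K w ->
     ((x = a /\ w = b) \/ (x = b /\ w = c) \/ (x = c /\ w = a)) ->
     Cmod (seg r x w) <= Cmod (w - x) * (e * (3 * per (a, b, c)))).
  { intros x w Hx Hw Hxw. apply seg_bound; [apply (Kseg K); auto|].
    intros t Ht.
    pose proof (edge_near (a, b, c) x w t Ht Hxw) as Hn. change (v1 (a, b, c)) with a in Hn, Hy.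
    assert (Hz : Cmod (x + RtoC t * (w - x) - y) <= 3 * per (a, b, c)).
    { replace (x + RtoC t * (w - x) - y)%C with ((x + RtoC t * (w - x) - a) + (a - y))%C by ring.
      eapply Rle_trans; [apply Cmod_triangle|]. rewrite (Cmod_sym a y). lra. }
    assert (Hz' : Cmod (x + RtoC t * (w - x) - y) < d) by lra.
    specialize (Hd _ Hz'). unfold r, aff.
    replace (f (x + RtoC t * (w - x)) - (f y - l * y + l * (x + RtoC t * (w - x))))%C
      with (f (x + RtoC t * (w - x)) - f y - (x + RtoC t * (w - x) - y) * l)%C by ring.
    eapply Rle_trans; [exact Hd|]. apply Rmult_le_compat_l; lra. }
  unfold E.
  pose proof (Bd a b Ha Hb (or_introl (conj eq_refl eq_refl))) as B1.
  pose proof (Bd b c Hb Hcc (or_intror (or_introl (conj eq_refl eq_refl)))) as B2.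
  pose proof (Bd c a Hcc Ha (or_intror (or_intror (conj eq_refl eq_refl)))) as B3.
  change (per (a, b, c)) with (Cmod (a - b) + Cmod (b - c) + Cmod (c - a))%R in B1, B2, B3 |- *.
  rewrite (Cmod_sym b a) in B1. rewrite (Cmod_sym c b) in B2. rewrite (Cmod_sym a c) in B3.
  eapply Rle_trans; [apply Cmod_triangle|].
  eapply Rle_trans; [apply Rplus_le_compat_r, Cmod_triangle|].
  set (P := Cmod (a - b) + Cmod (b - c) + Cmod (c - a)) in *.
  replace (e * (3 * P ^ 2)) with ((Cmod (a - b) + Cmod (b - c) + Cmod (c - a)) * (e * (3 * P))) by (unfold P; ring).
  lra.
Qed.

Definition Tn (f : C -> C) (T0 : tri) (n : nat) : tri := Nat.iter n (pick f) T0.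

Lemma Tn_S f T0 n : Tn f T0 (S n) = pick f (Tn f T0 n).
Proof. reflexivity. Qed.

Lemma Tn_K K f T0 n : convexK K -> KT K T0 -> KT K (Tn f T0 n).
Proof. intros Hc H. induction n; [exact H|]. rewrite Tn_S. apply pick_K; auto. Qed.

Lemma Tn_per f T0 n : per (Tn f T0 n) = per T0 * (1/2) ^ n.
Proof. induction n; simpl pow. - simpl. ring. - rewrite Tn_S, pick_per, IHn. field. Qed.

Lemma Tn_E K f T0 n : convexK K -> (forall z, K z -> contC f z) -> KT K T0 ->
  Cmod (ET f T0) <= 4 ^ n * Cmod (ET f (Tn f T0 n)).
Proof.
  intros Hc Hf H. induction n.
  - simpl. lra.
  - rewrite Tn_S. eapply Rle_trans; [exact IHn|].
    pose proof (pick_E K f (Tn f T0 n) Hc Hf (Tn_K K f T0 n Hc H)).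
    simpl pow. pose proof (pow_le 4 n ltac:(lra)). nra.
Qed.

Lemma Tn_v1 f T0 n k : Cmod (v1 (Tn f T0 (n + k)) - v1 (Tn f T0 n)) <= 2 * per (Tn f T0 n) * (1 - (1/2) ^ k).
Proof.
  induction k.
  - rewrite Nat.add_0_r. replace (v1 (Tn f T0 n) - v1 (Tn f T0 n))%C with (RtoC 0) by ring.
    rewrite Cmod_0. simpl. lra.
  - rewrite Nat.add_succ_r, Tn_S.
    replace (v1 (pick f (Tn f T0 (n + k))) - v1 (Tn f T0 n))%C
      with ((v1 (pick f (Tn f T0 (n + k))) - v1 (Tn f T0 (n + k))) + (v1 (Tn f T0 (n + k)) - v1 (Tn f T0 n)))%C by ring.
    eapply Rle_trans; [apply Cmod_triangle|].
    pose proof (pick_v1 f (Tn f T0 (n + k))) as H1.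
    rewrite (Tn_per f T0 (n + k)) in H1. rewrite (Tn_per f T0 n) in IHk |- *.
    rewrite pow_add in H1. simpl pow. lra.
Qed.

Lemma Tn_v1' f T0 n m : (n <= m)%nat -> Cmod (v1 (Tn f T0 m) - v1 (Tn f T0 n)) <= 2 * per (Tn f T0 n).
Proof.
  intros Hnm. replace m with (n + (m - n))%nat by lia.
  eapply Rle_trans; [apply Tn_v1|].
  pose proof (per_ge0 (Tn f T0 n)).
  assert (0 <= (1/2) ^ (m - n)) by (apply pow_le; lra). nra.
Qed.

Lemma half_pow_small r : 0 < r -> exists N, forall n, (n >= N)%nat -> (1/2) ^ n < r.
Proof.
  intros Hr. destruct (pow_lt_1_zero (1/2) ltac:(rewrite Rabs_pos_eq; lra) r Hr) as [N HN].
  exists N. intros n Hn. specialize (HN n Hn). rewrite Rabs_pos_eq in HN; [exact HN|].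
  apply pow_le; lra.
Qed.

Lemma le_of_eps x y : (forall e, 0 < e -> x <= y + e) -> x <= y.
Proof.
  intros H. destruct (Rle_dec x y) as [h|h]; [exact h|].
  specialize (H ((x - y) / 2) ltac:(lra)). lra.
Qed.

Theorem goursat K f a b c : convexK K -> closedK K ->
  (forall z, K z -> exists l, Cder f z l) -> K a -> K b -> K c -> E f a b c = 0%C.
Proof.
  intros Hc Hcl Hd Ha Hb Hcc.
  assert (Hf : forall z, K z -> contC f z).
  { intros z Hz. destruct (Hd z Hz) as [l Hl]. eapply deriv_contC; exact Hl. }
  set (T0 := (a, b, c)).
  assert (HT0 : KT K T0) by (repeat split; auto).
  set (p0 := per T0).
  assert (Hp0 : 0 <= p0) by apply per_ge0.
  set (u := fun n => v1 (Tn f T0 n)).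
  assert (Hlim : exists y : CompleteNormedModule.CompleteSpace _ C_CompleteNormedModule,
             filterlim u eventually (locally y)).
  { apply (@filterlim_locally_cauchy nat (CompleteNormedModule.CompleteSpace _ C_CompleteNormedModule) eventually _ u). intros eps.
    destruct (half_pow_small (eps / (4 * p0 + 1))) as [N HN].
    { apply Rdiv_lt_0_compat; [apply cond_pos|lra]. }
    exists (fun n => (N <= n)%nat). split; [exists N; auto|].
    intros x y Hx Hy.
    apply (@norm_compat1 C_AbsRing C_NormedModule).
    change (Cmod (u y - u x) < eps).
    replace (u y - u x)%C with ((u y - u N) - (u x - u N))%C by ring.
    eapply Rle_lt_trans; [apply Cmod_triangle|]. rewrite Cmod_opp.
    pose proof (Tn_v1' f T0 N y Hy) as G1. pose proof (Tn_v1' f T0 N x Hx) as G2.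
    unfold u. rewrite (Tn_per f T0 N) in G1, G2. fold p0 in G1, G2.
    specialize (HN N (le_n N)).
    assert (Hpos : 0 < eps) by apply cond_pos.
    apply Rlt_div_r in HN; [|lra].
    assert (0 <= (1/2)^N) by (apply pow_le; lra).
    nra. }
  destruct Hlim as [y Hy].
  assert (Hclose : forall e, 0 < e -> exists N, forall n, (N <= n)%nat -> Cmod (u n - y) < e).
  { intros e He.
    assert (Hl : @locally C_UniformSpace y (fun z => Cmod (z - y) < e)).
    { refine (@locally_le_locally_norm C_AbsRing C_NormedModule y _ _).
      exists (mkposreal e He). intros z Hz. exact Hz. }
    destruct (Hy _ Hl) as [N HN]. exists N. exact HN. }
  assert (Hyn : forall n, Cmod (y - u n) <= 2 * per (Tn f T0 n)).
  { intros n. apply le_of_eps. intros e He.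
    destruct (Hclose e He) as [N HN].
    specialize (HN (Nat.max N n) (Nat.le_max_l _ _)).
    pose proof (Tn_v1' f T0 n (Nat.max N n) (Nat.le_max_r _ _)) as H2.
    replace (y - u n)%C with (- (u (Nat.max N n) - y) + (u (Nat.max N n) - u n))%C by ring.
    eapply Rle_trans; [apply Cmod_triangle|]. rewrite Cmod_opp. unfold u in *. lra. }
  assert (Ky : K y).
  { apply Hcl. intros e He. destruct (Hclose e He) as [N HN]. exists (u N). split.
    - unfold u. pose proof (Tn_K K f T0 N Hc HT0) as HK. destruct (Tn f T0 N) as [[a' b'] c'].
      simpl. apply HK.
    - apply HN. lia. }
  destruct (Hd y Ky) as [l Hl]. rewrite Cderiv_eps in Hl.
  assert (Main : forall e, 0 < e -> Cmod (ET f T0) <= e * (3 * p0 ^ 2)).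
  { intros e He. destruct (Hl e He) as [d [Hd0 Hdd]].
    destruct (half_pow_small (d / (3 * p0 + 1))) as [N HN].
    { apply Rdiv_lt_0_compat; lra. }
    specialize (HN N (le_n N)).
    assert (HpN : 3 * per (Tn f T0 N) < d).
    { rewrite Tn_per. fold p0. apply Rlt_div_r in HN; [|lra].
      assert (0 <= (1/2)^N) by (apply pow_le; lra). nra. }
    pose proof (tri_bound K f (Tn f T0 N) y l e d Hc Hf (Tn_K K f T0 N Hc HT0) Hdd (Hyn N) HpN He) as TB.
    pose proof (Tn_E K f T0 N Hc Hf HT0) as TE.
    rewrite Tn_per in TB. fold p0 in TB.
    eapply Rle_trans; [exact TE|].
    assert (Q : 4 ^ N * (e * (3 * (p0 * (1/2) ^ N) ^ 2)) = e * (3 * p0 ^ 2)).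
    { replace ((p0 * (1/2) ^ N) ^ 2) with (p0 ^ 2 * ((1/2) * (1/2)) ^ N) by (rewrite Rpow_mult_distr; ring).
      replace (4 ^ N * (e * (3 * (p0 ^ 2 * ((1/2) * (1/2)) ^ N)))) with (e * (3 * p0 ^ 2) * (4 * ((1/2) * (1/2))) ^ N)
        by (rewrite !Rpow_mult_distr; ring).
      replace (4 * ((1/2) * (1/2))) with 1 by field. rewrite pow1. ring. }
    rewrite <- Q. apply Rmult_le_compat_l; [apply pow_le; lra|exact TB]. }
  change (E f a b c) with (ET f T0).
  apply Cmod_eq_0. apply Rle_antisym; [|apply Cmod_ge_0].
  apply le_of_eps. intros e He.
  specialize (Main (e / (3 * p0 ^ 2 + 1)) ltac:(apply Rdiv_lt_0_compat; nra)).
  assert (e / (3 * p0 ^ 2 + 1) * (3 * p0 ^ 2) <= e).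
  { apply Rle_trans with (e / (3 * p0 ^ 2 + 1) * (3 * p0 ^ 2 + 1)).
    - apply Rmult_le_compat_l; [apply Rlt_le, Rdiv_lt_0_compat; nra|lra].
    - right. field. nra. }
  lra.
Qed.

Lemma seg_pts_near z y t : 0 <= t <= 1 -> Cmod (z + RtoC t * (y - z) - z) <= Cmod (y - z).
Proof.
  intros Ht. replace (z + RtoC t * (y - z) - z)%C with (RtoC t * (y - z))%C by ring.
  rewrite Cmod_scal, Rabs_pos_eq by lra. pose proof (Cmod_ge_0 (y - z)%C). nra.
Qed.

Lemma Cmod_zz z : Cmod (z - z) = 0.
Proof. replace (z - z)%C with (RtoC 0) by ring. apply Cmod_0. Qed.

Lemma prim_deriv f z0 z rho : 0 < rho ->
  (forall y, Cmod (y - z) < rho -> contC f y) ->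
  (forall y, Cmod (y - z) < rho -> seg f z0 y = (seg f z0 z + seg f z y)%C) ->
  Cder (seg f z0) z (f z).
Proof.
  intros Hr Hc Hs. apply Cderiv_eps. intros e He.
  assert (Hz : contC f z) by (apply Hc; rewrite Cmod_zz; lra).
  destruct (Hz e He) as [d [Hd Hdd]].
  exists (Rmin rho d). split; [apply Rmin_pos; lra|]. intros y Hy.
  assert (Hy1 : Cmod (y - z) < rho) by (eapply Rlt_le_trans; [exact Hy|apply Rmin_l]).
  assert (Hy2 : Cmod (y - z) < d) by (eapply Rlt_le_trans; [exact Hy|apply Rmin_r]).
  rewrite (Hs y Hy1).
  assert (SC : segcont f z y).
  { intros t Ht. apply Hc. pose proof (seg_pts_near z y t Ht). lra. }
  assert (SK : segcont (fun _ => f z) z y).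
  { intros t Ht ee Hee. exists 1. split; [lra|]. intros u _. rewrite Cmod_zz. lra. }
  replace (seg f z0 z + seg f z y - seg f z0 z - (y - z) * f z)%C
    with (seg f z y - seg (fun _ => f z) z y)%C by (rewrite seg_const; ring).
  rewrite <- seg_minus by auto.
  rewrite Rmult_comm. apply seg_bound; [intros t Ht; apply contC_minus; [apply SC; auto|apply SK; auto]|].
  intros t Ht. left. apply Hdd. pose proof (seg_pts_near z y t Ht). lra.
Qed.

Lemma tri_add f z0 a b : E f z0 a b = 0%C -> segcont f z0 b ->
  seg f z0 b = (seg f z0 a + seg f a b)%C.
Proof.
  intros HE Hc. unfold E in HE. rewrite (seg_rev f z0 b Hc) in HE.
  apply (f_equal (fun x => x + seg f z0 b)%C) in HE.
  replace (seg f z0 a + seg f a b + - seg f z0 b + seg f z0 b)%C with (seg f z0 a + seg f a b)%C in HE by ring.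
  rewrite HE. ring.
Qed.

Definition Kdisk (r : R) (z : C) : Prop := Cmod z <= r.

Lemma Kdisk_convex r : convexK (Kdisk r).
Proof.
  intros x y t Hx Hy Ht. unfold Kdisk in *.
  replace (x + RtoC t * (y - x))%C with (RtoC (1 - t) * x + RtoC t * y)%C by (Csimpl; ring).
  eapply Rle_trans; [apply Cmod_triangle|]. rewrite !Cmod_scal.
  rewrite !Rabs_pos_eq by lra. nra.
Qed.

Lemma Kdisk_closed r : closedK (Kdisk r).
Proof.
  intros z H. unfold Kdisk. apply le_of_eps. intros e He.
  destruct (H e He) as [y [Hy1 Hy2]]. unfold Kdisk in Hy1.
  replace z with (y + (z - y))%C by ring.
  eapply Rle_trans; [apply Cmod_triangle|]. rewrite (Cmod_sym z y). lra.
Qed.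

Definition lin (z1 v : C) : R := Re (Cconj z1 * v).

Lemma lin_bound z1 v : Cmod z1 = 1 -> Rabs (lin z1 v) <= Cmod v.
Proof.
  intros H. unfold lin. eapply Rle_trans; [apply re_le_Cmod|].
  rewrite Cmod_mult, Cmod_conj, H. lra.
Qed.

Lemma lin_affine z1 x y t : lin z1 (x + RtoC t * (y - x))%C = (1 - t) * lin z1 x + t * lin z1 y.
Proof.
  unfold lin. replace (Cconj z1 * (x + RtoC t * (y - x)))%C
    with (RtoC (1 - t) * (Cconj z1 * x) + RtoC t * (Cconj z1 * y))%C by (Csimpl; ring).
  rewrite re_plus, !re_scal_l. ring.
Qed.

Lemma lin_minus z1 x y : lin z1 (x - y)%C = lin z1 x - lin z1 y.
Proof.
  unfold lin. replace (Cconj z1 * (x - y))%C with (Cconj z1 * x + - (Cconj z1 * y))%C by ring.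
  rewrite re_plus, re_opp. ring.
Qed.

Lemma lin_self z1 : Cmod z1 = 1 -> lin z1 z1 = 1.
Proof.
  intros H. unfold lin. rewrite Cmult_comm, <- Cmod2_conj, re_RtoC, H. ring.
Qed.

Lemma lin_scal z1 (s : R) v : lin z1 (RtoC s * v)%C = s * lin z1 v.
Proof.
  unfold lin. replace (Cconj z1 * (RtoC s * v))%C with (RtoC s * (Cconj z1 * v))%C by ring.
  apply re_scal_l.
Qed.

Definition Khalf (z1 : C) (r eta : R) (z : C) : Prop := Cmod z <= r /\ eta <= lin z1 z.

Lemma Khalf_convex z1 r eta : convexK (Khalf z1 r eta).
Proof.
  intros x y t [Hx1 Hx2] [Hy1 Hy2] Ht. split.
  - apply (Kdisk_convex r); auto.
  - rewrite lin_affine. nra.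
Qed.

Lemma Khalf_closed z1 r eta : Cmod z1 = 1 -> closedK (Khalf z1 r eta).
Proof.
  intros Hz1 z H. split.
  - apply (Kdisk_closed r). intros e He. destruct (H e He) as [y [[Hy1 _] Hy2]]. exists y. split; auto.
  - apply le_of_eps. intros e He. destruct (H e He) as [y [[_ Hy1] Hy2]].
    pose proof (lin_bound z1 (y - z)%C Hz1) as Hb. rewrite lin_minus in Hb.
    apply Rabs_le_between in Hb. lra.
Qed.

Lemma an_der w z : analytic_on Disk w -> Disk z -> exists l, Cder w z l.
Proof. intros H Hz. exact (H z Hz). Qed.

Lemma an_cont w z : analytic_on Disk w -> Disk z -> contC w z.
Proof. intros H Hz. destruct (H z Hz) as [l Hl]. eapply deriv_contC; exact Hl. Qed.

Lemma Disk_near z y : Disk z -> Cmod (y - z) < (1 - Cmod z) / 2 -> Disk y.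
Proof.
  unfold Disk. intros Hz Hy. replace y with (z + (y - z))%C by ring.
  eapply Rle_lt_trans; [apply Cmod_triangle|]. lra.
Qed.

Lemma F_add w a b : analytic_on Disk w -> Disk a -> Disk b ->
  seg w 0 b = (seg w 0 a + seg w a b)%C.
Proof.
  intros Hw Ha Hb. set (r := Rmax (Cmod a) (Cmod b)).
  assert (Hr : r < 1) by (unfold r; apply Rmax_lub_lt; auto).
  assert (HK : forall z, Kdisk r z -> Disk z) by (intros z Hz; unfold Kdisk, Disk in *; lra).
  assert (K0 : Kdisk r 0) by (unfold Kdisk; rewrite Cmod_0; unfold r; pose proof (Cmod_ge_0 a); pose proof (Rmax_l (Cmod a) (Cmod b)); lra).
  assert (Ka : Kdisk r a) by (unfold Kdisk, r; apply Rmax_l).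
  assert (Kb : Kdisk r b) by (unfold Kdisk, r; apply Rmax_r).
  apply tri_add.
  - apply (goursat (Kdisk r)); auto. apply Kdisk_convex. apply Kdisk_closed.
    intros z Hz. apply an_der; auto.
  - apply (Kseg (Kdisk r)); auto. apply Kdisk_convex. intros z Hz. apply an_cont; auto.
Qed.

Lemma F_der w z : analytic_on Disk w -> Disk z -> Cder (seg w 0) z (w z).
Proof.
  intros Hw Hz. apply (prim_deriv w 0 z ((1 - Cmod z) / 2)).
  - unfold Disk in Hz. lra.
  - intros y Hy. apply an_cont; auto. eapply Disk_near; eauto.
  - intros y Hy. apply F_add; auto. eapply Disk_near; eauto.
Qed.

Lemma g_nz (w : C -> C) (z : C) : z <> 0%C -> ang_integrand w z = ((w z - w 0) / z)%C.
Proof. intros H. unfold ang_integrand. destruct (Ceq_dec z (RtoC 0)) as [e|e]; [exfalso; apply H; exact e|reflexivity]. Qed.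

Lemma g_zero (w : C -> C) (l0 : C) : Cder w (RtoC 0) l0 -> ang_integrand w 0 = l0.
Proof.
  intros H. unfold ang_integrand. destruct (Ceq_dec 0 0) as [_|n]; [|exfalso; apply n; reflexivity].
  apply (@iota_unique C_AbsRing C_CompleteNormedModule); [|exact H].
  intros y Hy. apply is_C_derive_unique in Hy. apply is_C_derive_unique in H. congruence.
Qed.

Lemma g_cont0 (w : C -> C) (l0 : C) : Cder w (RtoC 0) l0 -> contC (ang_integrand w) (RtoC 0).
Proof.
  intros H. pose proof (g_zero w l0 H) as G0. rewrite Cderiv_eps in H.
  intros e He. destruct (H (e / 2) ltac:(lra)) as [d [Hd Hdd]].
  exists d. split; auto. intros y Hy. rewrite G0.
  destruct (Ceq_dec y 0) as [->|ny].
  - rewrite <- G0. rewrite Cmod_zz. lra.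
  - rewrite g_nz by auto. specialize (Hdd y Hy).
    replace (y - 0)%C with y in Hdd by ring.
    replace ((w y - w 0) / y - l0)%C with ((w y - w 0 - y * l0) / y)%C by (field; auto).
    rewrite Cmod_div by auto.
    assert (Hy0 : 0 < Cmod y) by (apply Cmod_gt_0; auto).
    apply Rle_lt_trans with (e / 2). { apply Rle_div_l; [lra|]. lra. } lra.
Qed.

Lemma inv_der (z : C) : z <> 0%C -> Cder Cinv z (- / (z * z))%C.
Proof.
  intros Hz. apply Cderiv_eps. intros e He.
  assert (Hz0 : 0 < Cmod z) by (apply Cmod_gt_0; auto).
  exists (Rmin (Cmod z / 2) (e * (Cmod z * Cmod z * Cmod z) / 2)). split.
  { apply Rmin_pos; [lra|]. apply Rdiv_lt_0_compat; [|lra]. assert (0 < Cmod z * Cmod z) by nra.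
    assert (0 < Cmod z * Cmod z * Cmod z) by (apply Rmult_lt_0_compat; lra).
    apply Rmult_lt_0_compat; lra. }
  intros y Hy.
  assert (Hy1 : Cmod (y - z) < Cmod z / 2) by (eapply Rlt_le_trans; [exact Hy|apply Rmin_l]).
  assert (Hy2 : Cmod (y - z) < e * (Cmod z * Cmod z * Cmod z) / 2) by (eapply Rlt_le_trans; [exact Hy|apply Rmin_r]).
  assert (Hyl : Cmod z / 2 <= Cmod y).
  { assert (T : Cmod z <= Cmod y + Cmod (y - z)).
    { replace z with (y + - (y - z))%C at 1 by ring. eapply Rle_trans; [apply Cmod_triangle|].
      rewrite Cmod_opp. lra. }
    lra. }
  assert (ny : y <> 0%C) by (intro; subst y; rewrite Cmod_0 in Hyl; lra).
  replace (/ y - / z - (y - z) * - / (z * z))%C with ((y - z) * (y - z) / (y * z * z))%C by (field; auto).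
  rewrite Cmod_div by (apply Cmult_neq_0; [apply Cmult_neq_0|]; auto).
  rewrite !Cmod_mult.
  pose proof (Cmod_ge_0 (y - z)%C) as Hm.
  apply Rle_div_l. { apply Rmult_lt_0_compat; [apply Rmult_lt_0_compat|]; lra. }
  assert (Cmod (y - z) * 2 <= e * (Cmod z * Cmod z * Cmod z)) by lra.
  assert (Cmod z * Cmod z * Cmod z <= 2 * (Cmod y * Cmod z * Cmod z)).
  { assert (0 <= Cmod z * Cmod z) by nra. nra. }
  assert (HA : Cmod (y - z) <= e * (Cmod y * Cmod z * Cmod z)).
  { assert (e * (Cmod z * Cmod z * Cmod z) <= e * (2 * (Cmod y * Cmod z * Cmod z)))
      by (apply Rmult_le_compat_l; lra). lra. }
  replace (e * Cmod (y - z) * (Cmod y * Cmod z * Cmod z)) with (Cmod (y - z) * (e * (Cmod y * Cmod z * Cmod z))) by ring.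
  apply Rmult_le_compat_l; lra.
Qed.

Lemma der_sub_const (f : C -> C) (k : C) z l : Cder f z l -> Cder (fun y => f y - k)%C z l.
Proof.
  rewrite !Cderiv_eps. intros H e He. destruct (H e He) as [d [Hd Hdd]]. exists d. split; auto.
  intros y Hy. replace (f y - k - (f z - k) - (y - z) * l)%C with (f y - f z - (y - z) * l)%C by ring.
  auto.
Qed.

Lemma prod_der (f g : C -> C) (z a b : C) : Cder f z a -> Cder g z b ->
  Cder (fun y => f y * g y)%C z (a * g z + f z * b)%C.
Proof.
  intros Hf Hg. pose proof (deriv_contC g z b Hg) as Cg.
  rewrite Cderiv_eps in Hf, Hg |- *. intros e He.
  pose proof (Cmod_ge_0 a) as Ha. pose proof (Cmod_ge_0 (g z)) as Hgz. pose proof (Cmod_ge_0 (f z)) as Hfz.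
  destruct (Hf (e / (3 * (Cmod (g z) + 1)))) as [d1 [Hd1 H1]]. { apply Rdiv_lt_0_compat; lra. }
  destruct (Hg (e / (3 * (Cmod (f z) + 1)))) as [d3 [Hd3 H3]]. { apply Rdiv_lt_0_compat; lra. }
  destruct (Cg (Rmin 1 (e / (3 * (Cmod a + 1))))) as [d2 [Hd2 H2]].
  { apply Rmin_pos; [lra|]. apply Rdiv_lt_0_compat; lra. }
  exists (Rmin d1 (Rmin d2 d3)). split. { repeat apply Rmin_pos; lra. }
  intros y Hy.
  assert (Hy1 : Cmod (y - z) < d1) by (eapply Rlt_le_trans; [exact Hy|apply Rmin_l]).
  assert (Hy2 : Cmod (y - z) < d2).
  { eapply Rlt_le_trans; [exact Hy|]. eapply Rle_trans; [apply Rmin_r|apply Rmin_l]. }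
  assert (Hy3 : Cmod (y - z) < d3).
  { eapply Rlt_le_trans; [exact Hy|]. eapply Rle_trans; [apply Rmin_r|apply Rmin_r]. }
  specialize (H1 y Hy1). specialize (H2 y Hy2). specialize (H3 y Hy3).
  assert (H2a : Cmod (g y - g z) < 1) by (eapply Rlt_le_trans; [exact H2|apply Rmin_l]).
  assert (H2b : Cmod (g y - g z) < e / (3 * (Cmod a + 1))) by (eapply Rlt_le_trans; [exact H2|apply Rmin_r]).
  assert (Hgy : Cmod (g y) <= Cmod (g z) + 1).
  { replace (g y) with (g z + (g y - g z))%C by ring. eapply Rle_trans; [apply Cmod_triangle|]. lra. }
  pose proof (Cmod_ge_0 (y - z)%C) as Hm.
  replace (f y * g y - f z * g z - (y - z) * (a * g z + f z * b))%C
    with ((f y - f z - (y - z) * a) * g y + (y - z) * a * (g y - g z) + f z * (g y - g z - (y - z) * b))%C by ring.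
  eapply Rle_trans; [apply Cmod_triangle|].
  eapply Rle_trans; [apply Rplus_le_compat_r, Cmod_triangle|].
  rewrite !Cmod_mult.
  assert (A1 : Cmod (f y - f z - (y - z) * a) * Cmod (g y) <= e / 3 * Cmod (y - z)).
  { apply Rle_trans with (e / (3 * (Cmod (g z) + 1)) * Cmod (y - z) * (Cmod (g z) + 1)).
    - apply Rmult_le_compat; try apply Cmod_ge_0; auto.
    - right. field. lra. }
  assert (A2 : Cmod (y - z) * Cmod a * Cmod (g y - g z) <= e / 3 * Cmod (y - z)).
  { apply Rle_trans with (Cmod (y - z) * (Cmod a + 1) * (e / (3 * (Cmod a + 1)))).
    - apply Rmult_le_compat; try apply Cmod_ge_0.
      + apply Rmult_le_pos; lra.
      + apply Rmult_le_compat_l; lra.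
      + lra.
    - right. field. lra. }
  assert (A3 : Cmod (f z) * Cmod (g y - g z - (y - z) * b) <= e / 3 * Cmod (y - z)).
  { apply Rle_trans with ((Cmod (f z) + 1) * (e / (3 * (Cmod (f z) + 1)) * Cmod (y - z))).
    - apply Rmult_le_compat; try apply Cmod_ge_0; auto. lra.
    - right. field. lra. }
  lra.
Qed.


Lemma g_der (w : C -> C) (z : C) : analytic_on Disk w -> Disk z -> z <> 0%C -> exists l, Cder (ang_integrand w) z l.
Proof.
  intros Hw Hz nz. destruct (an_der w z Hw Hz) as [l Hl].
  pose proof (der_sub_const w (w (RtoC 0)) z l Hl) as H1.
  pose proof (prod_der (fun y => w y - w (RtoC 0))%C Cinv z l (- / (z * z))%C H1 (inv_der z nz)) as H2.
  eexists. refine (is_derive_ext_loc _ _ z _ _ H2).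
  assert (Hz0 : 0 < Cmod z) by (apply Cmod_gt_0; auto).
  refine (@locally_le_locally_norm C_AbsRing (AbsRing_NormedModule C_AbsRing) z _ _).
  exists (mkposreal (Cmod z) Hz0). intros y Hy. change (Cmod (y - z) < Cmod z) in Hy.
  assert (ny : (y : C) <> RtoC 0).
  { intro H0. rewrite H0 in Hy.
    replace (RtoC 0 - z)%C with (- z)%C in Hy by ring. rewrite Cmod_opp in Hy. lra. }
  rewrite (g_nz w y ny). reflexivity.
Qed.

Lemma Cmod_conv x y t : 0 <= t <= 1 -> Cmod (x + RtoC t * (y - x))%C <= Rmax (Cmod x) (Cmod y).
Proof.
  intros Ht. apply (Kdisk_convex (Rmax (Cmod x) (Cmod y))); auto; unfold Kdisk; [apply Rmax_l|apply Rmax_r].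
Qed.

Lemma Disk_conv x y t : Disk x -> Disk y -> 0 <= t <= 1 -> Disk (x + RtoC t * (y - x))%C.
Proof.
  unfold Disk. intros Hx Hy Ht. eapply Rle_lt_trans; [apply Cmod_conv; auto|].
  apply Rmax_lub_lt; auto.
Qed.

Definition Om (z1 a : C) : Prop := Disk a /\ Cmod (a - z1) < 1/2.

Lemma Om_conv z1 x y t : Om z1 x -> Om z1 y -> 0 <= t <= 1 -> Om z1 (x + RtoC t * (y - x))%C.
Proof.
  intros [Hx1 Hx2] [Hy1 Hy2] Ht. split; [apply Disk_conv; auto|].
  replace (x + RtoC t * (y - x) - z1)%C with ((x - z1) + RtoC t * ((y - z1) - (x - z1)))%C by ring.
  eapply Rle_lt_trans; [apply Cmod_conv; auto|]. apply Rmax_lub_lt; auto.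
Qed.

Lemma Om_lin z1 a : Cmod z1 = 1 -> Om z1 a -> 1/2 < lin z1 a.
Proof.
  intros H [_ Ha]. pose proof (lin_bound z1 (a - z1)%C H) as B. rewrite lin_minus, lin_self in B by auto.
  apply Rabs_le_between in B. lra.
Qed.

Lemma lin_nz z1 a : 0 < lin z1 a -> a <> RtoC 0.
Proof.
  intros H E0. subst a. unfold lin in H. rewrite Cmult_0_r in H. simpl in H. lra.
Qed.

Lemma g_contC w z : analytic_on Disk w -> Disk z -> contC (ang_integrand w) z.
Proof.
  intros Hw Hz. destruct (Ceq_dec z (RtoC 0)) as [->|nz].
  - destruct (an_der w (RtoC 0) Hw Hz) as [l0 Hl0]. eapply g_cont0; exact Hl0.
  - destruct (g_der w z Hw Hz nz) as [l Hl]. eapply deriv_contC; exact Hl.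
Qed.

Lemma Disk0 : Disk (RtoC 0).
Proof. unfold Disk. rewrite Cmod_0. lra. Qed.

Lemma g_segcont w x y : analytic_on Disk w -> Disk x -> Disk y -> segcont (ang_integrand w) x y.
Proof. intros Hw Hx Hy t Ht. apply g_contC; auto. apply Disk_conv; auto. Qed.

Lemma g_tri0 w z1 a b : analytic_on Disk w -> Cmod z1 = 1 -> Om z1 a -> Om z1 b ->
  E (ang_integrand w) (RtoC 0) a b = 0%C.
Proof.
  intros Hw Hz1 Ha Hb. set (g := ang_integrand w).
  destruct (an_der w (RtoC 0) Hw Disk0) as [l0 Hl0].
  pose proof (g_zero w l0 Hl0) as G0. pose proof (g_cont0 w l0 Hl0) as C0.
  destruct (C0 1 Rlt_0_1) as [d0 [Hd0 Hdd0]].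
  set (B := Cmod l0 + 1).
  assert (HB : forall y, Cmod y < d0 -> Cmod (g y) <= B).
  { intros y Hy. assert (Hy' : Cmod (y - RtoC 0) < d0) by (replace (y - RtoC 0)%C with y by ring; exact Hy).
    specialize (Hdd0 y Hy').
    fold g in Hdd0, G0. rewrite G0 in Hdd0. unfold B.
    replace (g y) with (l0 + (g y - l0))%C by ring. eapply Rle_trans; [apply Cmod_triangle|]. lra. }
  assert (DA : Disk a) by apply Ha. assert (DB : Disk b) by apply Hb.
  pose proof (Om_lin z1 a Hz1 Ha) as La. pose proof (Om_lin z1 b Hz1 Hb) as Lb.
  assert (Key : forall eps, 0 < eps -> eps < 1 -> eps < d0 -> Cmod (E g (RtoC 0) a b) <= 4 * eps * B).
  { intros eps He1 He2 He3.
    set (ea := (RtoC eps * a)%C). set (eb := (RtoC eps * b)%C).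
    assert (Rabs eps = eps) by (apply Rabs_pos_eq; lra).
    assert (Hea : Cmod ea <= eps) by (unfold ea; rewrite Cmod_scal; unfold Disk in DA; nra).
    assert (Heb : Cmod eb <= eps) by (unfold eb; rewrite Cmod_scal; unfold Disk in DB; nra).
    assert (Dea : Disk ea) by (unfold Disk; lra). assert (Deb : Disk eb) by (unfold Disk; lra).
    assert (SC : forall x y, Disk x -> Disk y -> segcont g x y) by (intros; apply g_segcont; auto).
    assert (D1 : seg g (RtoC 0) a = (seg g (RtoC 0) ea + seg g ea a)%C).
    { apply (seg_split g (RtoC 0) a eps ea); auto; [apply SC; auto; apply Disk0|lra|unfold ea; ring]. }
    assert (D2 : seg g b (RtoC 0) = (seg g b eb + seg g eb (RtoC 0))%C).
    { apply (seg_split g b (RtoC 0) (1 - eps) eb); auto; [apply SC; auto; apply Disk0|lra|unfold eb; Csimpl; ring]. }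
    set (r := Rmax (Cmod a) (Cmod b)).
    assert (Hr : r < 1) by (unfold r; apply Rmax_lub_lt; auto).
    set (K := Khalf z1 r (eps / 4)).
    assert (KD : forall z, K z -> exists l, Cder g z l).
    { intros z [Hz1' Hz2']. apply g_der; [exact Hw|unfold Disk; lra|apply (lin_nz z1); lra]. }
    assert (Ka : K a) by (split; [apply Rmax_l|lra]).
    assert (Kb : K b) by (split; [apply Rmax_r|lra]).
    assert (Kea : K ea).
    { split. - unfold ea. rewrite Cmod_scal. pose proof (Rmax_l (Cmod a) (Cmod b)). fold r in H0.
               pose proof (Cmod_ge_0 a). nra.
      - unfold ea. rewrite lin_scal. nra. }
    assert (Keb : K eb).
    { split. - unfold eb. rewrite Cmod_scal. pose proof (Rmax_r (Cmod a) (Cmod b)). fold r in H0.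
               pose proof (Cmod_ge_0 b). nra.
      - unfold eb. rewrite lin_scal. nra. }
    assert (G1 : E g ea a b = 0%C).
    { apply (goursat K); auto. apply Khalf_convex. apply Khalf_closed; auto. }
    assert (G2 : E g ea b eb = 0%C).
    { apply (goursat K); auto. apply Khalf_convex. apply Khalf_closed; auto. }
    assert (Dec : E g (RtoC 0) a b = E g (RtoC 0) ea eb).
    { unfold E in *. rewrite D1, D2.
      rewrite (seg_rev g ea b) in G1 by (apply SC; auto).
      rewrite (seg_rev g ea eb) in G2 by (apply SC; auto).
      transitivity (seg g (RtoC 0) ea + seg g ea eb + seg g eb (RtoC 0)
                     + (seg g ea a + seg g a b + - seg g ea b) + (seg g ea b + seg g b eb + - seg g ea eb))%C.
      - ring.
      - rewrite G1, G2. ring. }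
    rewrite Dec. unfold E.
    assert (BD : forall x y, Cmod x <= eps -> Cmod y <= eps -> Cmod (seg g x y) <= Cmod (y - x) * B).
    { intros x y Hx Hy. apply seg_bound. apply SC; unfold Disk; lra.
      intros t Ht. apply HB. eapply Rle_lt_trans; [apply Cmod_conv; auto|].
      apply Rmax_lub_lt; lra. }
    assert (C0' : Cmod (RtoC 0) <= eps) by (rewrite Cmod_0; lra).
    pose proof (BD _ _ C0' Hea) as B1. pose proof (BD _ _ Hea Heb) as B2. pose proof (BD _ _ Heb C0') as B3.
    assert (M1 : Cmod (ea - RtoC 0) <= eps) by (replace (ea - RtoC 0)%C with ea by ring; lra).
    assert (M3 : Cmod (RtoC 0 - eb) <= eps) by (replace (RtoC 0 - eb)%C with (- eb)%C by ring; rewrite Cmod_opp; lra).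
    assert (M2 : Cmod (eb - ea) <= 2 * eps).
    { replace (eb - ea)%C with (eb + - ea)%C by ring. eapply Rle_trans; [apply Cmod_triangle|].
      rewrite Cmod_opp. lra. }
    assert (HB0 : 0 <= B) by (unfold B; pose proof (Cmod_ge_0 l0); lra).
    eapply Rle_trans; [apply Cmod_triangle|].
    eapply Rle_trans; [apply Rplus_le_compat_r, Cmod_triangle|].
    assert (Cmod (ea - RtoC 0) * B <= eps * B) by (apply Rmult_le_compat_r; lra).
    assert (Cmod (eb - ea) * B <= 2 * eps * B) by (apply Rmult_le_compat_r; lra).
    assert (Cmod (RtoC 0 - eb) * B <= eps * B) by (apply Rmult_le_compat_r; lra).
    lra. }
  apply Cmod_eq_0. apply Rle_antisym; [|apply Cmod_ge_0].
  apply le_of_eps. intros e He.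
  assert (HB0 : 0 < B) by (unfold B; pose proof (Cmod_ge_0 l0); lra).
  set (eps := Rmin (1/2) (Rmin (d0 / 2) (e / (8 * B)))).
  assert (E1 : 0 < eps) by (unfold eps; repeat apply Rmin_pos; try lra; apply Rdiv_lt_0_compat; lra).
  assert (E2 : eps <= 1/2) by apply Rmin_l.
  assert (E3 : eps <= d0 / 2) by (eapply Rle_trans; [apply Rmin_r|apply Rmin_l]).
  assert (E4 : eps <= e / (8 * B)) by (eapply Rle_trans; [apply Rmin_r|apply Rmin_r]).
  specialize (Key eps E1 ltac:(lra) ltac:(lra)).
  assert (4 * eps * B <= e / 2).
  { apply Rle_trans with (4 * (e / (8 * B)) * B). { apply Rmult_le_compat_r; lra. }
    right. field. lra. }
  lra.
Qed.

Lemma id_der (z : C) : Cder (fun u => u) z (RtoC 1).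
Proof.
  apply Cderiv_eps. intros e He. exists 1. split; [lra|]. intros y _.
  replace (y - z - (y - z) * RtoC 1)%C with (RtoC 0) by ring. rewrite Cmod_0.
  pose proof (Cmod_ge_0 (y - z)%C). nra.
Qed.

Lemma der_add_const (f : C -> C) (k : C) z l : Cder f z l -> Cder (fun y => k + f y)%C z l.
Proof.
  rewrite !Cderiv_eps. intros H e He. destruct (H e He) as [d [Hd Hdd]]. exists d. split; auto.
  intros y Hy. replace (k + f y - (k + f z) - (y - z) * l)%C with (f y - f z - (y - z) * l)%C by ring.
  auto.
Qed.

Lemma ball_conv (z1 x y : C) d t : Cmod (x - z1) < d -> Cmod (y - z1) < d -> 0 <= t <= 1 ->
  Cmod (x + RtoC t * (y - x) - z1) < d.
Proof.
  intros Hx Hy Ht.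
  replace (x + RtoC t * (y - x) - z1)%C with ((x - z1) + RtoC t * ((y - z1) - (x - z1)))%C by ring.
  eapply Rle_lt_trans; [apply Cmod_conv; auto|]. apply Rmax_lub_lt; auto.
Qed.


Lemma P_add w z1 a b : analytic_on Disk w -> Cmod z1 = 1 -> Om z1 a -> Om z1 b ->
  seg (ang_integrand w) (RtoC 0) b = (seg (ang_integrand w) (RtoC 0) a + seg (ang_integrand w) a b)%C.
Proof.
  intros Hw Hz Ha Hb. apply tri_add. - apply (g_tri0 w z1); auto.
  - apply g_segcont; auto. apply Disk0. apply Hb.
Qed.

Lemma P_der w z1 z : analytic_on Disk w -> Cmod z1 = 1 -> Om z1 z ->
  Cder (seg (ang_integrand w) (RtoC 0)) z (ang_integrand w z).
Proof.
  intros Hw Hz1 [Hz1' Hz2'].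
  assert (HO : forall y, Cmod (y - z) < Rmin ((1 - Cmod z) / 2) (1/2 - Cmod (z - z1)) -> Om z1 y).
  { intros y Hy. split.
    - eapply Disk_near; [exact Hz1'|]. eapply Rlt_le_trans; [exact Hy|apply Rmin_l].
    - replace (y - z1)%C with ((y - z) + (z - z1))%C by ring.
      eapply Rle_lt_trans; [apply Cmod_triangle|].
      assert (Cmod (y - z) < 1/2 - Cmod (z - z1)) by (eapply Rlt_le_trans; [exact Hy|apply Rmin_r]). lra. }
  apply (prim_deriv _ _ z (Rmin ((1 - Cmod z) / 2) (1/2 - Cmod (z - z1)))).
  - unfold Disk in Hz1'. apply Rmin_pos; lra.
  - intros y Hy. apply g_contC; auto. apply HO; auto.
  - intros y Hy. apply (P_add w z1); auto. split; auto.
Qed.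

Lemma ang_prim_eq w z : ang_prim w z = (- Ci * seg (ang_integrand w) (RtoC 0) z)%C.
Proof.
  unfold ang_prim, seg, CRInt. f_equal.
  apply (@RInt_ext C_R_CompleteNormedModule). intros x _. unfold segI.
  replace (RtoC 0 + RtoC x * (z - RtoC 0))%C with (RtoC x * z)%C by ring.
  replace (z - RtoC 0)%C with z by ring. reflexivity.
Qed.

Lemma Rder_cont (g : R -> C) t d : Rder g t d ->
  forall e, 0 < e -> exists de, 0 < de /\ forall s, Rabs (s - t) < de -> Cmod (g s - g t) < e.
Proof.
  intros H. rewrite Rderiv_eps in H. intros e He.
  destruct (H 1 Rlt_0_1) as [d1 [Hd1 H1]].
  pose proof (Cmod_ge_0 d) as Hd.
  exists (Rmin d1 (e / (Cmod d + 1))). split. { apply Rmin_pos; [lra|apply Rdiv_lt_0_compat; lra]. }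
  intros s Hs.
  assert (Hs1 : Rabs (s - t) < d1) by (eapply Rlt_le_trans; [exact Hs|apply Rmin_l]).
  assert (Hs2 : Rabs (s - t) < e / (Cmod d + 1)) by (eapply Rlt_le_trans; [exact Hs|apply Rmin_r]).
  specialize (H1 s Hs1).
  replace (g s - g t)%C with ((g s - g t - RtoC (s - t) * d) + RtoC (s - t) * d)%C by ring.
  eapply Rle_lt_trans; [apply Cmod_triangle|]. rewrite Cmod_scal.
  apply Rlt_div_r in Hs2; [|lra]. pose proof (Rabs_pos (s - t)). nra.
Qed.

Lemma cont_wgd (w : C -> C) (g dg : R -> C) t d :
  contC w (g t) -> Rder g t d -> @continuous R_UniformSpace C_UniformSpace dg t ->
  @continuous R_UniformSpace C_UniformSpace (fun s => (w (g s) * dg s)%C) t.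
Proof.
  intros Hw Hg Hdg. rewrite Rcont_eps in Hdg |- *. intros e He.
  pose proof (Cmod_ge_0 (dg t)) as H1. pose proof (Cmod_ge_0 (w (g t))) as H2.
  destruct (Hdg 1 Rlt_0_1) as [a1 [Ha1 A1]].
  destruct (Hdg (e / (2 * (Cmod (w (g t)) + 1)))) as [a2 [Ha2 A2]]. { apply Rdiv_lt_0_compat; lra. }
  destruct (Hw (e / (2 * (Cmod (dg t) + 1)))) as [b1 [Hb1 B1]]. { apply Rdiv_lt_0_compat; lra. }
  destruct (Rder_cont g t d Hg b1 Hb1) as [c1 [Hc1 C1]].
  exists (Rmin a1 (Rmin a2 c1)). split. { repeat apply Rmin_pos; lra. }
  intros s Hs.
  assert (S1 : Rabs (s - t) < a1) by (eapply Rlt_le_trans; [exact Hs|apply Rmin_l]).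
  assert (S2 : Rabs (s - t) < a2).
  { eapply Rlt_le_trans; [exact Hs|]. eapply Rle_trans; [apply Rmin_r|apply Rmin_l]. }
  assert (S3 : Rabs (s - t) < c1).
  { eapply Rlt_le_trans; [exact Hs|]. eapply Rle_trans; [apply Rmin_r|apply Rmin_r]. }
  specialize (A1 s S1). specialize (A2 s S2). specialize (B1 _ (C1 s S3)).
  assert (Hds : Cmod (dg s) <= Cmod (dg t) + 1).
  { replace (dg s) with (dg t + (dg s - dg t))%C by ring. eapply Rle_trans; [apply Cmod_triangle|]. lra. }
  replace (w (g s) * dg s - w (g t) * dg t)%C with ((w (g s) - w (g t)) * dg s + w (g t) * (dg s - dg t))%C by ring.
  eapply Rle_lt_trans; [apply Cmod_triangle|]. rewrite !Cmod_mult.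
  assert (X1 : Cmod (w (g s) - w (g t)) * Cmod (dg s) <= e / (2 * (Cmod (dg t) + 1)) * (Cmod (dg t) + 1)).
  { apply Rmult_le_compat; try apply Cmod_ge_0; lra. }
  assert (X2 : Cmod (w (g t)) * Cmod (dg s - dg t) < (Cmod (w (g t)) + 1) * (e / (2 * (Cmod (w (g t)) + 1)))).
  { apply Rle_lt_trans with (Cmod (w (g t)) * (e / (2 * (Cmod (w (g t)) + 1)))).
    - apply Rmult_le_compat_l; lra.
    - apply Rmult_lt_compat_r; [apply Rdiv_lt_0_compat|]; lra. }
  assert (e / (2 * (Cmod (dg t) + 1)) * (Cmod (dg t) + 1) = e / 2) by (field; lra).
  assert ((Cmod (w (g t)) + 1) * (e / (2 * (Cmod (w (g t)) + 1))) = e / 2) by (field; lra).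
  lra.
Qed.

Lemma contC_plus f g z : contC f z -> contC g z -> contC (fun u => f u + g u)%C z.
Proof.
  intros Hf Hg e He.
  destruct (Hf (e/2)) as [d1 [Hd1 H1]]; [lra|].
  destruct (Hg (e/2)) as [d2 [Hd2 H2]]; [lra|].
  exists (Rmin d1 d2). split; [apply Rmin_pos; lra|]. intros y Hy.
  assert (Hy1 : Cmod (y - z) < d1) by (eapply Rlt_le_trans; [exact Hy|apply Rmin_l]).
  assert (Hy2 : Cmod (y - z) < d2) by (eapply Rlt_le_trans; [exact Hy|apply Rmin_r]).
  specialize (H1 y Hy1). specialize (H2 y Hy2).
  replace (f y + g y - (f z + g z))%C with ((f y - f z) + (g y - g z))%C by ring.
  eapply Rle_lt_trans; [apply Cmod_triangle|]. lra.
Qed.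

Lemma seg_plus f g a b : segcont f a b -> segcont g a b ->
  seg (fun z => f z + g z)%C a b = (seg f a b + seg g a b)%C.
Proof.
  intros Hf Hg. pose proof (is_RInt_plus _ _ _ _ _ _ (seg_correct f a b Hf) (seg_correct g a b Hg)) as H.
  transitivity (CRInt (fun y => plus (segI f a b y) (segI g a b y)) 0 1).
  - unfold seg, CRInt. apply (@RInt_ext C_R_CompleteNormedModule). intros x _. unfold segI.
    change (plus ?x ?y) with (x + y)%C. Cring.
  - unfold CRInt. apply (@is_RInt_unique C_R_CompleteNormedModule). exact H.
Qed.

Lemma seg_w_formula w z1 a b d : analytic_on Disk w -> Cmod z1 = 1 -> 0 < d <= 1/2 ->
  Disk a -> Disk b -> Cmod (a - z1) < d -> Cmod (b - z1) < d ->
  seg w a b =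
   ((b * (w (RtoC 0) + seg (ang_integrand w) (RtoC 0) b) - a * (w (RtoC 0) + seg (ang_integrand w) (RtoC 0) a))
    - seg (seg (ang_integrand w) (RtoC 0)) a b)%C.
Proof.
  intros Hw Hz1 Hd Ha Hb Ha' Hb'.
  set (g := ang_integrand w). set (P := seg g (RtoC 0)). set (w0 := w (RtoC 0)).
  assert (HO : forall t, 0 <= t <= 1 -> Om z1 (a + RtoC t * (b - a))%C).
  { intros t Ht. split; [apply Disk_conv; auto|]. pose proof (ball_conv z1 a b d t Ha' Hb' Ht). lra. }
  assert (SP : segcont P a b).
  { intros t Ht. eapply deriv_contC. apply (P_der w z1); auto. }
  assert (SW : segcont w a b).
  { intros t Ht. apply an_cont; auto. apply HO; auto. }
  assert (HF : seg (fun z => w z + P z)%C a b = ((b * (w0 + P b)) - (a * (w0 + P a)))%C).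
  { apply (seg_FTC (fun z => z * (w0 + P z))%C).
    - intros t Ht. set (z := (a + RtoC t * (b - a))%C).
      assert (Oz : Om z1 z) by (apply HO; auto).
      assert (nz : z <> RtoC 0).
      { apply (lin_nz z1). pose proof (Om_lin z1 z Hz1 Oz). lra. }
      pose proof (prod_der (fun u => u) (fun u => w0 + P u)%C z (RtoC 1) (g z) (id_der z)
                    (der_add_const P w0 z (g z) (P_der w z1 z Hw Hz1 Oz))) as D.
      replace (w z + P z)%C with (RtoC 1 * (w0 + P z) + z * g z)%C. exact D.
      unfold g. rewrite g_nz by auto. unfold w0. field. auto.
    - intros t Ht. apply contC_plus; [apply SW|apply SP]; auto. }
  rewrite seg_plus in HF by auto.
  rewrite <- HF. ring.
Qed.

Theorem mainTheorem10 (w : C -> C) (z1 : C) :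
  analytic_on Disk w ->
  Cmod z1 = 1 ->
  borderline_hard w z1 ->
  forall gamma dgamma : R -> C, curve_to gamma dgamma z1 ->
  exists L : C,
    filterlim (fun s => path_integral w gamma dgamma s) (at_left 1) (locally L).
Proof.
  intros Hw Hz1 [_ [_ [L HL]]] gamma dgamma [HD [Hder [Hcont [Hg1 Hlim]]]].
  set (g := ang_integrand w). set (P := seg g (RtoC 0)). set (F := seg w (RtoC 0)).
  set (w0 := w (RtoC 0)). set (L' := (Ci * L)%C).
  assert (Pl : forall eta, 0 < eta -> exists de, 0 < de /\ forall z, Disk z -> Cmod (z - z1) < de ->
                  Cmod (P z - L') < eta).
  { intros eta Heta.
    assert (Hloc : @locally C_UniformSpace L (fun u => Cmod (u - L) < eta)).
    { refine (@locally_le_locally_norm C_AbsRing C_NormedModule L _ _).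
      exists (mkposreal eta Heta). intros u Hu. exact Hu. }
    specialize (HL _ Hloc). unfold filtermap, within in HL.
    destruct (@locally_norm_le_locally C_AbsRing C_NormedModule z1 _ HL) as [de Hde].
    exists de. split; [apply cond_pos|]. intros z Dz Hz.
    specialize (Hde z Hz Dz). simpl in Hde.
    rewrite ang_prim_eq in Hde. fold g P in Hde.
    replace (P z - L')%C with (Ci * (- Ci * P z - L))%C by (unfold L'; Cfield).
    rewrite Cmod_mult, Cmod_Ci. lra. }
  assert (PF : forall s, 0 <= s < 1 -> path_integral w gamma dgamma s = (F (gamma s) - F (gamma 0))%C).
  { intros s Hs. unfold path_integral. apply curve_FTC; [lra| | |].
    - intros t Ht. apply Hder. lra.
    - intros t Ht. apply F_der; auto. apply HD. lra.
    - intros t Ht. apply (cont_wgd w gamma dgamma t (dgamma t)).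
      + apply an_cont; auto. apply HD. lra.
      + apply Hder. lra.
      + apply Hcont. lra. }
  apply (proj1 (@filterlim_locally_cauchy R (CompleteNormedModule.CompleteSpace _ C_CompleteNormedModule)
                  (at_left 1) (at_left_proper_filter 1) _)).
  intros eps. pose proof (cond_pos eps) as Heps.
  set (M := Cmod L' + 1).
  assert (HM : 0 < M) by (unfold M; pose proof (Cmod_ge_0 L'); lra).
  pose proof (Cmod_ge_0 w0) as Hw0.
  set (eta := Rmin 1 (eps / 4)).
  assert (Heta : 0 < eta) by (unfold eta; apply Rmin_pos; lra).
  assert (Heta1 : eta <= 1) by apply Rmin_l.
  assert (Heta2 : eta <= eps / 4) by apply Rmin_r.
  destruct (Pl eta Heta) as [de [Hde Hdde]].
  set (K0 := Cmod w0 + 2 * M + 1).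
  set (dl := Rmin de (Rmin (1/2) (eps / (8 * K0)))).
  assert (Hdl : 0 < dl).
  { unfold dl. repeat apply Rmin_pos; try lra. apply Rdiv_lt_0_compat; unfold K0; lra. }
  assert (Hdl1 : dl <= de) by apply Rmin_l.
  assert (Hdl2 : dl <= 1/2) by (eapply Rle_trans; [apply Rmin_r|apply Rmin_l]).
  assert (Hdl3 : dl <= eps / (8 * K0)) by (eapply Rle_trans; [apply Rmin_r|apply Rmin_r]).
  exists (fun s => (0 <= s < 1) /\ Cmod (gamma s - z1) < dl). split.
  - apply filter_and.
    + exists (mkposreal 1 Rlt_0_1). intros y Hy Hy1. change (Rabs (y - 1) < 1) in Hy.
      apply Rabs_lt_between' in Hy. lra.
    + assert (Hl : @locally C_UniformSpace z1 (fun u => Cmod (u - z1) < dl)).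
      { refine (@locally_le_locally_norm C_AbsRing C_NormedModule z1 _ _).
        exists (mkposreal dl Hdl). intros u Hu. exact Hu. }
      exact (Hlim _ Hl).
  - intros u v [Hu0 Hu] [Hv0 Hv].
    apply (@norm_compat1 C_AbsRing C_NormedModule).
    change (Cmod (path_integral w gamma dgamma v - path_integral w gamma dgamma u) < eps).
    rewrite (PF v Hv0), (PF u Hu0).
    set (a := gamma u) in *. set (b := gamma v) in *.
    assert (Da : Disk a) by (apply HD; lra). assert (Db : Disk b) by (apply HD; lra).
    replace (F b - F (gamma 0) - (F a - F (gamma 0)))%C with (F b - F a)%C by ring.
    unfold F. rewrite (F_add w a b Hw Da Db).
    replace (seg w (RtoC 0) a + seg w a b - seg w (RtoC 0) a)%C with (seg w a b) by ring.
    rewrite (seg_w_formula w z1 a b dl Hw Hz1 ltac:(lra) Da Db Hu Hv).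
    fold g P w0.
    assert (Pa : Cmod (P a - L') < eta) by (apply Hdde; auto; lra).
    assert (Pb : Cmod (P b - L') < eta) by (apply Hdde; auto; lra).
    assert (Hba : Cmod (b - a) < 2 * dl).
    { replace (b - a)%C with ((b - z1) + - (a - z1))%C by ring.
      eapply Rle_lt_trans; [apply Cmod_triangle|]. rewrite Cmod_opp. lra. }
    assert (HPb : Cmod (P b) <= M).
    { replace (P b) with (L' + (P b - L'))%C by ring. eapply Rle_trans; [apply Cmod_triangle|]. unfold M; lra. }
    assert (T1 : Cmod (b * (w0 + P b) - a * (w0 + P a)) <= Cmod (b - a) * (Cmod w0 + M) + 2 * eta).
    { replace (b * (w0 + P b) - a * (w0 + P a))%C
        with ((b - a) * (w0 + P b) + a * ((P b - L') - (P a - L')))%C by ring.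
      eapply Rle_trans; [apply Cmod_triangle|]. rewrite !Cmod_mult.
      apply Rplus_le_compat.
      - apply Rmult_le_compat_l; [apply Cmod_ge_0|]. eapply Rle_trans; [apply Cmod_triangle|]. lra.
      - unfold Disk in Da. pose proof (Cmod_ge_0 a).
        assert (Cmod (P b - L' - (P a - L')) <= 2 * eta).
        { replace (P b - L' - (P a - L'))%C with ((P b - L') + - (P a - L'))%C by ring.
          eapply Rle_trans; [apply Cmod_triangle|]. rewrite Cmod_opp. lra. }
        pose proof (Cmod_ge_0 (P b - L' - (P a - L'))%C). nra. }
    assert (T2 : Cmod (seg P a b) <= Cmod (b - a) * M).
    { apply seg_bound.
      - intros t Ht. eapply deriv_contC. apply (P_der w z1); auto.
        split; [apply Disk_conv; auto|]. pose proof (ball_conv z1 a b dl t Hu Hv Ht). lra.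
      - intros t Ht. replace (P (a + RtoC t * (b - a))%C) with (L' + (P (a + RtoC t * (b - a))%C - L'))%C by ring.
        eapply Rle_trans; [apply Cmod_triangle|]. unfold M.
        assert (Cmod (P (a + RtoC t * (b - a))%C - L') < eta).
        { apply Hdde. apply Disk_conv; auto. pose proof (ball_conv z1 a b dl t Hu Hv Ht). lra. }
        lra. }
    eapply Rle_lt_trans.
    { replace (b * (w0 + P b) - a * (w0 + P a) - seg P a b)%C
        with ((b * (w0 + P b) - a * (w0 + P a)) + - seg P a b)%C by ring.
      apply Cmod_triangle. }
    rewrite Cmod_opp.
    assert (Q : Cmod (b - a) * (Cmod w0 + M) + Cmod (b - a) * M <= eps / 4).
    { pose proof (Cmod_ge_0 (b - a)%C).
      apply Rle_trans with (2 * dl * K0).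
      - unfold K0. nra.
      - apply Rle_trans with (2 * (eps / (8 * K0)) * K0).
        + apply Rmult_le_compat_r; [unfold K0; lra|lra].
        + right. field. unfold K0; lra. }
    lra.
Qed.
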